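(* Let $\gamma>1$, $0<\alpha<\frac12$. (a) If $\bar\rho>0$ and $(\rho,u)$ is a smooth solution as in Lemma 3.1 on $\mathbb R\times[0,T]$ (with $\rho>0$, $\rho\to\bar\rho$ at infinity), then there exist constants $0<\tilde C\le C$, depending only on $\alpha,\gamma,\bar\rho$ and on the initial quantity $E_0=\int_{\mathbb R}\{\rho|u|^2+[(\rho^{\alpha-1/2})_x]^2+\rho\Psi(\rho,\bar\rho)\}(x,0)dx$, such that $\tilde C\le\rho(x,t)\le C$ on $\mathbb R\times[0,T]$. (b) If $\bar\rho=0$, $M>0$, and $(\rho,u)$ is a smooth solution on $[-M,M]\times[0,T]$ of $\rho_t+(\rho u)_x=0$, $(\rho u)_t+(\rho u^2+\rho^\gamma)_x=(\rho^\alpha u_x)_x$ with $\rho>0$ and boundary condition $u(\pm M,t)=0$, then $C(M)\le\rho(x,t)\le C$ on $[-M,M]\times[0,T]$, where $C$ depends only on $\alpha,\gamma$ and the initial quantities $\int_{-M}^M\{\rho|u|^2+[(\rho^{\alpha-1/2})_x]^2+\rho^\gamma\}(x,0)dx$, $\int_{-M}^M\rho(x,0)dx$, and $C(M)>0$ depends additionally on $M$.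
   Context: $\Psi(\rho,\bar\rho)=\int_{\bar\rho}^{\rho}\frac{s^\gamma-\bar\rho^\gamma}{s^2}ds$, so that $\rho\Psi(\rho,\bar\rho)=\frac{1}{\gamma-1}[\rho^\gamma-\bar\rho^\gamma-\gamma\bar\rho^{\gamma-1}(\rho-\bar\rho)]$. Lemma 3.1 asserts the uniform-in-time energy/entropy bound $\sup_t\int\{\rho u^2+[(\rho^{\alpha-1/2}/(\alpha-1/2))_x]^2+\rho\Psi(\rho,\bar\rho)\}dx+\int_0^T\int\{\rho^\alpha u_x^2+[(\rho^{(\alpha+\gamma-1)/2}-\bar\rho^{(\alpha+\gamma-1)/2})_x]^2\}\le C$ for smooth positive solutions with sufficient decay (or with $u=0$ at the boundary of a bounded interval). *)

(* Defs.v *)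
From Stdlib Require Import Reals Lra.
Open Scope R_scope.

Definition Dstrip (T : R) (x t : R) : Prop := 0 <= t <= T.
Definition Drect (M T : R) (x t : R) : Prop := -M <= x <= M /\ 0 <= t <= T.

(* Partial derivatives within a domain D (one-sided at the boundary). *)
Definition pdx (D : R -> R -> Prop) (f : R -> R -> R) (x t l : R) : Prop :=
  limit1_in (fun h => (f (x + h) t - f x t) / h)
            (fun h => h <> 0 /\ D (x + h) t) l 0.
Definition pdt (D : R -> R -> Prop) (f : R -> R -> R) (x t l : R) : Prop :=
  limit1_in (fun h => (f x (t + h) - f x t) / h)
            (fun h => h <> 0 /\ D x (t + h)) l 0.

Definition cont_on (D : R -> R -> Prop) (f : R -> R -> R) : Prop :=
  forall x t, D x t -> forall eps, 0 < eps -> exists del, 0 < del /\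
    forall y s, D y s -> Rabs (y - x) < del -> Rabs (s - t) < del ->
      Rabs (f y s - f x t) < eps.

(* C^infinity on D: all iterated partial derivatives exist, are jointly
   continuous, and each satisfies the side property P. *)
CoInductive smooth_on (D : R -> R -> Prop) (P : (R -> R -> R) -> Prop)
  (f : R -> R -> R) : Prop :=
| smooth_on_intro (fx ft : R -> R -> R) :
    P f -> cont_on D f ->
    (forall x t, D x t -> pdx D f x t (fx x t)) ->
    (forall x t, D x t -> pdt D f x t (ft x t)) ->
    smooth_on D P fx -> smooth_on D P ft -> smooth_on D P f.

Definition noP (f : R -> R -> R) : Prop := True.

Definition decay0 (T : R) (f : R -> R -> R) : Prop :=
  forall eps, 0 < eps -> exists Rr, forall x t, 0 <= t <= T -> Rr < Rabs x ->
    Rabs (f x t) < eps.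

Definition is_solution (D : R -> R -> Prop) (gamma alpha : R)
  (rho u : R -> R -> R) : Prop :=
  (forall x t, D x t -> 0 < rho x t) /\
  (forall x t, D x t -> exists a b,
      pdt D rho x t a /\ pdx D (fun y s => rho y s * u y s) x t b /\ a + b = 0) /\
  exists ux : R -> R -> R,
    (forall x t, D x t -> pdx D u x t (ux x t)) /\
    (forall x t, D x t -> exists a b c,
      pdt D (fun y s => rho y s * u y s) x t a /\
      pdx D (fun y s => rho y s * (u y s)^2 + Rpower (rho y s) gamma) x t b /\
      pdx D (fun y s => Rpower (rho y s) alpha * ux y s) x t c /\
      a + b = c).

Definition rhoPsi (gamma rhobar r : R) : R :=
  / (gamma - 1) * (Rpower r gamma - Rpower rhobar gamma
                   - gamma * Rpower rhobar (gamma - 1) * (r - rhobar)).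

Definition has_int_R (f : R -> R) (L : R) : Prop :=
  (forall a b, inhabited (Riemann_integrable f a b)) /\
  forall eps, 0 < eps -> exists Rr, forall a b (pr : Riemann_integrable f a b),
    a < - Rr -> Rr < b -> Rabs (RiemannInt pr - L) < eps.

Definition has_int (f : R -> R) (a b L : R) : Prop :=
  exists pr : Riemann_integrable f a b, RiemannInt pr = L.

(* Main.v *)
Require Import Defs.
From Stdlib Require Import Reals Lra.
From Coquelicot Require Import Coquelicot.
Open Scope R_scope.

Definition clamp (a b x : R) := Rmax a (Rmin b x).

Lemma clamp_in a b x : a <= b -> a <= clamp a b x <= b.
Proof. intros; unfold clamp, Rmax, Rmin; repeat destruct Rle_dec; lra. Qed.

Lemma clamp_id a b x : a <= x <= b -> clamp a b x = x.
Proof. intros; unfold clamp, Rmax, Rmin; repeat destruct Rle_dec; lra. Qed.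

Lemma clamp_lip a b x y : a <= b -> Rabs (clamp a b y - clamp a b x) <= Rabs (y - x).
Proof.
  intros; unfold clamp, Rmax, Rmin; repeat destruct Rle_dec;
  unfold Rabs; repeat destruct Rcase_abs; lra.
Qed.

Lemma pdx_dpl (D : R -> R -> Prop) X T f x t l a b :
  (forall x t, D x t <-> X x /\ 0 <= t <= T) ->
  (forall y, a <= y <= b -> X y) -> a < x < b -> 0 <= t <= T ->
  pdx D f x t l -> derivable_pt_lim (fun y => f y t) x l.
Proof.
  intros HD HX Hx Ht H eps Heps.
  destruct (H eps Heps) as [alp [Halp H1]].
  assert (Hd : 0 < Rmin alp (Rmin (x - a) (b - x))).
  { repeat apply Rmin_pos; lra. }
  exists (mkposreal _ Hd). intros h Hh Hha. simpl in Hha.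
  assert (Hm1 := Rmin_l alp (Rmin (x - a) (b - x))).
  assert (Hm2 := Rmin_r alp (Rmin (x - a) (b - x))).
  assert (Hm3 := Rmin_l (x - a) (b - x)).
  assert (Hm4 := Rmin_r (x - a) (b - x)).
  assert (Hab : Rabs h < x - a /\ Rabs h < b - x) by lra.
  assert (Hh2 : - Rabs h <= h <= Rabs h) by (unfold Rabs; destruct Rcase_abs; lra).
  specialize (H1 h). simpl in H1. unfold Rdist in H1.
  apply H1. split.
  - split; [exact Hh|]. apply HD. split; [apply HX; lra| exact Ht].
  - rewrite Rminus_0_r. lra.
Qed.

Lemma pdt_dpl (D : R -> R -> Prop) X T f x t l :
  (forall x t, D x t <-> X x /\ 0 <= t <= T) ->
  X x -> 0 < t < T ->
  pdt D f x t l -> derivable_pt_lim (fun s => f x s) t l.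
Proof.
  intros HD HX Ht H eps Heps.
  destruct (H eps Heps) as [alp [Halp H1]].
  assert (Hd : 0 < Rmin alp (Rmin t (T - t))).
  { repeat apply Rmin_pos; lra. }
  exists (mkposreal _ Hd). intros h Hh Hha. simpl in Hha.
  assert (Hm1 := Rmin_l alp (Rmin t (T - t))).
  assert (Hm2 := Rmin_r alp (Rmin t (T - t))).
  assert (Hm3 := Rmin_l t (T - t)).
  assert (Hm4 := Rmin_r t (T - t)).
  assert (Hh2 : - Rabs h <= h <= Rabs h) by (unfold Rabs; destruct Rcase_abs; lra).
  specialize (H1 h). simpl in H1. unfold Rdist in H1.
  apply H1. split.
  - split; [exact Hh|]. apply HD. split; [exact HX| lra].
  - rewrite Rminus_0_r. lra.
Qed.

Lemma cont_clamp (D : R -> R -> Prop) X T f a b :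
  (forall x t, D x t <-> X x /\ 0 <= t <= T) ->
  a <= b -> (forall y, a <= y <= b -> X y) -> 0 <= T ->
  cont_on D f ->
  forall x t, continuity_2d_pt (fun x t => f (clamp a b x) (clamp 0 T t)) x t.
Proof.
  intros HD Hab HX HT Hc x t eps.
  assert (Hx := clamp_in a b x Hab). assert (Ht := clamp_in 0 T t HT).
  destruct (Hc (clamp a b x) (clamp 0 T t)) with (eps := pos eps) as [del [Hdel H1]].
  { apply HD. split; [apply HX; lra| lra]. }
  { apply cond_pos. }
  exists (mkposreal _ Hdel). intros u v Hu Hv. simpl in Hu, Hv.
  assert (Hu' := clamp_in a b u Hab). assert (Hv' := clamp_in 0 T v HT).
  apply H1.
  - apply HD. split; [apply HX; lra| lra].
  - eapply Rle_lt_trans; [apply clamp_lip; lra| exact Hu].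
  - eapply Rle_lt_trans; [apply clamp_lip; lra| exact Hv].
Qed.

Lemma c2d_cont_x f x t : continuity_2d_pt f x t -> continuity_pt (fun y => f y t) x.
Proof.
  intros H eps Heps. destruct (H (mkposreal _ Heps)) as [d Hd].
  exists d. split; [apply cond_pos|]. intros y [_ Hy]. simpl in *. unfold Rdist in *.
  apply Hd; [exact Hy| rewrite Rminus_eq_0, Rabs_R0; apply cond_pos].
Qed.

Lemma c2d_cont_t f x t : continuity_2d_pt f x t -> continuity_pt (fun s => f x s) t.
Proof.
  intros H eps Heps. destruct (H (mkposreal _ Heps)) as [d Hd].
  exists d. split; [apply cond_pos|]. intros y [_ Hy]. simpl in *. unfold Rdist in *.
  apply Hd; [rewrite Rminus_eq_0, Rabs_R0; apply cond_pos| exact Hy].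
Qed.

Definition ccont a b (f : R -> R) := forall y, continuity_pt (fun y => f (clamp a b y)) y.

Lemma ccont_exRInt_sub a b c d f : a <= c <= d -> d <= b -> ccont a b f -> ex_RInt f c d.
Proof.
  intros H1 H2 Hc.
  apply ex_RInt_ext with (f := fun y => f (clamp a b y)).
  { intros x Hx. rewrite Rmin_left in Hx by lra. rewrite Rmax_right in Hx by lra.
    rewrite clamp_id; [reflexivity| lra]. }
  apply (@ex_RInt_continuous R_CompleteNormedModule). intros z _. apply continuity_pt_filterlim. apply Hc.
Qed.

Lemma ccont_exRInt a b f : a <= b -> ccont a b f -> ex_RInt f a b.
Proof. intros; eapply ccont_exRInt_sub; eauto; lra. Qed.

Lemma dpl_local f g x l :
  (exists d, 0 < d /\ forall z, Rabs (z - x) < d -> g z = f z) ->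
  derivable_pt_lim f x l -> derivable_pt_lim g x l.
Proof.
  intros [d [Hd Hfg]] H eps Heps. destruct (H eps Heps) as [del Hdel].
  assert (Hm : 0 < Rmin del d) by (apply Rmin_pos; [apply cond_pos| lra]).
  exists (mkposreal _ Hm). intros h Hh Hha. simpl in Hha.
  assert (Hm1 := Rmin_l del d). assert (Hm2 := Rmin_r del d).
  rewrite !Hfg.
  - apply Hdel; [exact Hh| lra].
  - rewrite Rminus_eq_0, Rabs_R0; lra.
  - replace (x + h - x) with h by ring. lra.
Qed.

Lemma dpl_clamp a b f x l : a < x < b -> derivable_pt_lim f x l ->
  derivable_pt_lim (fun y => f (clamp a b y)) x l.
Proof.
  intros Hx H. apply dpl_local with f; auto.
  exists (Rmin (x - a) (b - x)). split; [apply Rmin_pos; lra|].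
  intros z Hz. assert (H1 := Rmin_l (x - a) (b - x)). assert (H2 := Rmin_r (x - a) (b - x)).
  rewrite clamp_id; [reflexivity|]. revert Hz; unfold Rabs; destruct Rcase_abs; lra.
Qed.

Lemma ftc a b f f' : a <= b -> ccont a b f -> ccont a b f' ->
  (forall y, a < y < b -> derivable_pt_lim f y (f' y)) ->
  RInt f' a b = f b - f a.
Proof.
  intros Hab Hf Hf' Hd.
  set (g := fun y => f' (clamp a b y)).
  assert (Hg : forall y, continuous g y) by (intros; apply continuity_pt_filterlim, Hf').
  assert (HI : forall y, is_derive (fun z => RInt g a z) y (g y)).
  { intros y. apply is_derive_RInt with (a := a).
    - apply filter_forall. intros b0. apply RInt_correct.
      apply (@ex_RInt_continuous R_CompleteNormedModule). intros; apply Hg.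
    - apply Hg. }
  set (Phi := fun y => f (clamp a b y) - RInt g a (clamp a b y)).
  destruct (MVT_gen Phi a b (fun _ => 0)) as [c [_ Hc]].
  - rewrite Rmin_left, Rmax_right by lra. intros x Hx.
    apply is_derive_Reals.
    replace 0 with (f' x - g x) by (unfold g; rewrite clamp_id; lra).
    apply derivable_pt_lim_minus.
    + apply dpl_clamp; auto.
    + apply dpl_clamp; auto. apply is_derive_Reals. apply HI.
  - intros x _. unfold Phi. apply continuity_pt_minus; [apply Hf|].
    apply (continuity_pt_comp (clamp a b) (fun z => RInt g a z)).
    + intros eps Heps. exists eps. split; [lra|]. intros y [_ Hy].
      simpl in *. unfold Rdist in *. eapply Rle_lt_trans; [apply clamp_lip; lra| exact Hy].
    + apply continuity_pt_filterlim. apply (@ex_derive_continuous R_AbsRing R_NormedModule). eexists; apply HI.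
  - unfold Phi in Hc. rewrite !clamp_id in Hc by lra.
    rewrite RInt_point in Hc. unfold zero in Hc; simpl in Hc.
    rewrite (RInt_ext f' g). lra.
    intros x Hx. rewrite Rmin_left, Rmax_right in Hx by lra. unfold g. rewrite clamp_id; lra.
Qed.

Lemma RInt_ge_const f a b m : a <= b -> ex_RInt f a b ->
  (forall x, a < x < b -> m <= f x) -> m * (b - a) <= RInt f a b.
Proof.
  intros Hab He H.
  replace (m * (b - a)) with (RInt (fun _ => m) a b).
  - apply RInt_le; auto. apply (@ex_RInt_const R_NormedModule).
  - rewrite RInt_const. unfold scal; simpl; unfold mult; simpl. ring.
Qed.

Lemma RInt_le_const' f a b m : a <= b -> ex_RInt f a b ->
  (forall x, a < x < b -> f x <= m) -> RInt f a b <= m * (b - a).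
Proof.
  intros Hab He H.
  replace (m * (b - a)) with (RInt (fun _ => m) a b).
  - apply RInt_le; auto. apply (@ex_RInt_const R_NormedModule).
  - rewrite RInt_const. unfold scal; simpl; unfold mult; simpl. ring.
Qed.

Lemma RInt_ge0 f a b : a <= b -> ex_RInt f a b ->
  (forall x, a < x < b -> 0 <= f x) -> 0 <= RInt f a b.
Proof. intros. replace 0 with (0 * (b - a)) by ring. apply RInt_ge_const; auto. Qed.

Lemma RInt_sub_le f a b c d : a <= c -> c <= d -> d <= b -> ex_RInt f a b ->
  (forall x, a < x < b -> 0 <= f x) -> RInt f c d <= RInt f a b.
Proof.
  intros H1 H2 H3 He Hp.
  assert (Hac : ex_RInt f a c) by (apply (@ex_RInt_Chasles_1 R_CompleteNormedModule) with b; lra || auto).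
  assert (Hcb : ex_RInt f c b) by (apply (@ex_RInt_Chasles_2 R_CompleteNormedModule) with a; lra || auto).
  assert (Hcd : ex_RInt f c d) by (apply (@ex_RInt_Chasles_1 R_CompleteNormedModule) with b; lra || auto).
  assert (Hdb : ex_RInt f d b) by (apply (@ex_RInt_Chasles_2 R_CompleteNormedModule) with c; lra || auto).
  rewrite <- (@RInt_Chasles R_CompleteNormedModule f a c b) by auto.
  rewrite <- (@RInt_Chasles R_CompleteNormedModule f c d b) by auto.
  unfold plus; simpl.
  assert (0 <= RInt f a c) by (apply RInt_ge0; auto; intros; apply Hp; lra).
  assert (0 <= RInt f d b) by (apply RInt_ge0; auto; intros; apply Hp; lra).
  lra.
Qed.

Lemma cauchy_schwarz f a b : a <= b -> ex_RInt f a b -> ex_RInt (fun x => (f x)^2) a b ->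
  (RInt f a b)^2 <= (b - a) * RInt (fun x => (f x)^2) a b.
Proof.
  intros Hab H1 H2.
  destruct (Req_dec a b) as [<-|Hne].
  { rewrite !RInt_point. unfold zero; simpl. lra. }
  set (I1 := RInt f a b). set (I2 := RInt (fun x => (f x)^2) a b).
  set (m := I1 / (b - a)).
  assert (Hpos : 0 <= RInt (fun x => (f x - m)^2) a b).
  { apply RInt_ge0; auto.
    - apply ex_RInt_ext with (fun x => plus (plus ((f x)^2) (scal (-2*m) (f x))) (m^2)).
      + intros; unfold plus, scal; simpl; unfold mult; simpl; ring.
      + apply (@ex_RInt_plus R_NormedModule); [apply (@ex_RInt_plus R_NormedModule); auto; apply (@ex_RInt_scal R_NormedModule); auto| apply (@ex_RInt_const R_NormedModule)].
    - intros; apply pow2_ge_0. }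
  rewrite (RInt_ext _ (fun x => plus (plus ((f x)^2) (scal (-2*m) (f x))) (m^2))) in Hpos.
  2: { intros; unfold plus, scal; simpl; unfold mult; simpl; ring. }
  rewrite (@RInt_plus R_CompleteNormedModule) in Hpos.
  2: { apply (@ex_RInt_plus R_NormedModule); auto; apply (@ex_RInt_scal R_NormedModule); auto. }
  2: { apply (@ex_RInt_const R_NormedModule). }
  rewrite (@RInt_plus R_CompleteNormedModule) in Hpos; auto.
  2: { apply (@ex_RInt_scal R_NormedModule); auto. }
  rewrite (@RInt_scal R_CompleteNormedModule) in Hpos; auto. rewrite RInt_const in Hpos.
  unfold plus, scal in Hpos; simpl in Hpos; unfold mult in Hpos; simpl in Hpos.
  replace (RInt (fun x : R => f x * (f x * 1)) a b) with I2 in Hpos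
    by (unfold I2; apply RInt_ext; intros; simpl; ring).
  assert (Hl : 0 < b - a) by lra.
  fold I1 in Hpos. unfold m in Hpos.
  replace (I2 + -2 * (I1 / (b - a)) * I1 + (b - a) * (I1 / (b - a) * (I1 / (b - a) * 1)))
    with (((b - a) * I2 - I1 ^ 2) / (b - a)) in Hpos by (field; lra).
  assert (H0 : ((b - a) * I2 - I1 ^ 2) = (b-a) * (((b - a) * I2 - I1 ^ 2) / (b - a))) by (field; lra).
  assert (0 <= (b-a) * (((b - a) * I2 - I1 ^ 2) / (b - a))) by (apply Rmult_le_pos; lra).
  lra.
Qed.


Lemma mvt_open f f' a b : a < b -> (forall c, a <= c <= b -> continuity_pt f c) ->
  (forall c, a < c < b -> derivable_pt_lim f c (f' c)) ->
  exists c, a < c < b /\ f b - f a = f' c * (b - a).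
Proof.
  intros Hab Hc Hd.
  assert (pr1 : forall c, a < c < b -> derivable_pt f c).
  { intros c Hc'. exists (f' c). apply Hd; auto. }
  assert (pr2 : forall c, a < c < b -> derivable_pt id c) by (intros; apply derivable_pt_id).
  destruct (MVT f id a b pr1 pr2 Hab Hc) as [c [P HP]].
  { intros; apply derivable_continuous_pt, derivable_pt_id. }
  exists c. split; auto.
  rewrite (derive_pt_eq_0 f c (f' c) (pr1 c P) (Hd c P)) in HP.
  rewrite (derive_pt_eq_0 id c 1 (pr2 c P)) in HP.
  - unfold id in HP. lra.
  - apply derivable_pt_lim_id.
Qed.

Lemma c2d_swap f x t : continuity_2d_pt f x t -> continuity_2d_pt (fun u v => f v u) t x.
Proof.
  intros H eps. destruct (H eps) as [d Hd]. exists d. intros u v Hu Hv. apply Hd; auto.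
Qed.

Lemma c2d_local f g x t : (exists d, 0 < d /\ forall u v, Rabs (u - x) < d -> Rabs (v - t) < d -> f u v = g u v) ->
  continuity_2d_pt g x t -> continuity_2d_pt f x t.
Proof.
  intros [d [Hd Hfg]] H eps. destruct (H eps) as [d' Hd'].
  assert (Hm : 0 < Rmin d d') by (apply Rmin_pos; [lra| apply cond_pos]).
  exists (mkposreal _ Hm). simpl. intros u v Hu Hv.
  assert (H1 := Rmin_l d d'). assert (H2 := Rmin_r d d').
  rewrite !Hfg; try lra. apply Hd'; lra.
  rewrite !Rminus_eq_0, Rabs_R0; auto. rewrite !Rminus_eq_0, Rabs_R0; auto.
Qed.

Lemma c2d_ccont f a b T t : 0 <= T -> 0 <= t <= T ->
  (forall x t, continuity_2d_pt (fun x t => f (clamp a b x) (clamp 0 T t)) x t) ->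
  ccont a b (fun x => f x t).
Proof.
  intros HT Ht H y. pose proof (c2d_cont_x _ y t (H y t)) as Hc. simpl in Hc.
  rewrite (clamp_id 0 T t Ht) in Hc. exact Hc.
Qed.

Lemma energy_ineq (e et F Fx : R -> R -> R) a b T eps :
  a < b -> 0 < T ->
  (forall x t, continuity_2d_pt (fun x t => e (clamp a b x) (clamp 0 T t)) x t) ->
  (forall x t, continuity_2d_pt (fun x t => et (clamp a b x) (clamp 0 T t)) x t) ->
  (forall t, 0 < t < T -> ccont a b (fun x => F x t)) ->
  (forall t, 0 < t < T -> ccont a b (fun x => Fx x t)) ->
  (forall x t, a <= x <= b -> 0 < t < T -> derivable_pt_lim (fun s => e x s) t (et x t)) ->
  (forall x t, a < x < b -> 0 < t < T -> derivable_pt_lim (fun y => F y t) x (Fx x t)) ->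
  (forall x t, a < x < b -> 0 < t < T -> et x t + Fx x t <= 0) ->
  (forall t, 0 < t < T -> F a t - F b t <= eps) ->
  forall t, 0 <= t <= T -> RInt (fun x => e x t) a b <= RInt (fun x => e x 0) a b + eps * t.
Proof.
  intros Hab HT He Het HF HFx Hde HdF Hineq Hflux.
  set (ee := fun s x => e (clamp a b x) (clamp 0 T s)).
  set (g := fun s => RInt (ee s) a b).
  assert (Hg : forall s, 0 <= s <= T -> g s = RInt (fun x => e x s) a b).
  { intros s Hs. unfold g, ee. apply RInt_ext. intros x Hx.
    rewrite Rmin_left, Rmax_right in Hx by lra. rewrite !clamp_id; auto; lra. }
  assert (Hex : forall s, ex_RInt (ee s) a b).
  { intros s. apply (@ex_RInt_continuous R_CompleteNormedModule). intros z _.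
    apply continuity_pt_filterlim. unfold ee. apply (c2d_cont_x _ z s (He z s)). }
  assert (Hgc : forall s0, continuity_pt g s0).
  { intros s0 eps0 Heps0.
    assert (Hq : 0 < eps0 / (2 * (b - a))) by (apply Rdiv_lt_0_compat; lra).
    destruct (uniform_continuity_2d (fun x t => e (clamp a b x) (clamp 0 T t)) a b (s0 - 1) (s0 + 1))
      with (eps := mkposreal _ Hq) as [d Hd].
    { intros; apply He. }
    exists (Rmin d 1). split; [apply Rmin_pos; [apply cond_pos| lra]|].
    intros s [_ Hs]. simpl in Hs. unfold Rdist in *.
    assert (H1 := Rmin_l d 1). assert (H2 := Rmin_r d 1).
    change (Rabs (g s - g s0) < eps0).
    unfold g. replace (RInt (ee s) a b - RInt (ee s0) a b) with (RInt (fun x => minus (ee s x) (ee s0 x)) a b)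
      by (rewrite (@RInt_minus R_CompleteNormedModule) by apply Hex; reflexivity).
    eapply Rle_lt_trans.
    - apply abs_RInt_le_const with (M := eps0 / (2 * (b - a))).
      + lra.
      + apply (@ex_RInt_minus R_NormedModule); apply Hex.
      + intros x Hx. unfold minus, plus, opp; simpl. left.
        apply (Hd x s0 x s);
        try lra; try (revert Hs; unfold Rabs; repeat destruct Rcase_abs; lra);
        try (rewrite Rminus_eq_0, Rabs_R0; apply cond_pos).
    - assert (Hba : 0 < b - a) by lra.
      replace ((b - a) * (eps0 / (2 * (b - a)))) with (eps0 / 2) by (field; lra). lra. }
  assert (Hgd : forall s0, 0 < s0 < T -> derivable_pt_lim g s0 (RInt (fun x => et x s0) a b)).
  { intros s0 Hs0. apply is_derive_Reals.
    assert (Hloc : forall s, Rabs (s - s0) < Rmin s0 (T - s0) -> 0 < s < T).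
    { intros s Hs. assert (H1 := Rmin_l s0 (T - s0)). assert (H2 := Rmin_r s0 (T - s0)).
      revert Hs; unfold Rabs; destruct Rcase_abs; lra. }
    assert (Hmp : 0 < Rmin s0 (T - s0)) by (apply Rmin_pos; lra).
    assert (HD : forall s x, 0 < s < T -> is_derive (fun u => ee u x) s (et (clamp a b x) s)).
    { intros s x Hs. apply is_derive_Reals. unfold ee.
      apply (dpl_clamp 0 T (fun u => e (clamp a b x) u)); auto.
      apply Hde; auto. apply clamp_in; lra. }
    assert (HR : RInt (fun x => et x s0) a b = RInt (fun x => Derive (fun u => ee u x) s0) a b).
    { apply RInt_ext. intros x Hx. rewrite Rmin_left, Rmax_right in Hx by lra.
      symmetry. transitivity (et (clamp a b x) s0).
      { apply is_derive_unique. apply HD; auto. }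
      rewrite clamp_id; auto; lra. }
    rewrite HR. apply is_derive_RInt_param.
    - exists (mkposreal _ Hmp). intros s Hs x _. simpl in Hs.
      eexists. apply HD. apply Hloc. exact Hs.
    - intros x _.
      apply c2d_local with (g := fun u v => et (clamp a b v) (clamp 0 T u)).
      + exists (Rmin s0 (T - s0)). split; auto. intros u v Hu Hv.
        transitivity (et (clamp a b v) u).
        { apply is_derive_unique. apply HD. apply Hloc; auto. }
        rewrite (clamp_id 0 T u); auto. apply Hloc in Hu; lra.
      + apply (c2d_swap (fun x t => et (clamp a b x) (clamp 0 T t))). apply Het.
    - apply filter_forall. intros s. apply Hex. }
  assert (Hgb : forall s0, 0 < s0 < T -> RInt (fun x => et x s0) a b <= eps).
  { intros s0 Hs0.
    assert (Hc1 : ccont a b (fun x => et x s0)) by (apply (c2d_ccont et a b T s0); auto; lra).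
    assert (Hc2 := HFx s0 Hs0).
    apply Rle_trans with (RInt (fun x => - Fx x s0) a b).
    - apply RInt_le; try lra.
      + apply ccont_exRInt; auto; lra.
      + apply ex_RInt_ext with (fun x => opp (Fx x s0)); [intros; reflexivity|].
        apply (@ex_RInt_opp R_NormedModule). apply ccont_exRInt; auto; lra.
      + intros x Hx. specialize (Hineq x s0 Hx Hs0). lra.
    - rewrite (RInt_ext _ (fun x => opp (Fx x s0))) by (intros; reflexivity).
      rewrite (@RInt_opp R_CompleteNormedModule) by (apply ccont_exRInt; auto; lra).
      rewrite (ftc a b (fun x => F x s0) (fun x => Fx x s0)); auto; try lra; try (intros; apply HdF; auto).
      + unfold opp; simpl. specialize (Hflux s0 Hs0). lra.
      }
  intros t Ht.
  destruct (Req_dec t 0) as [->|Ht0].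
  { lra. }
  rewrite <- (Hg t Ht), <- (Hg 0) by lra.
  destruct (mvt_open g (fun s => RInt (fun x => et x s) a b) 0 t) as [c [Hc Hgc']]; try lra.
  { intros; apply Hgc. }
  { intros c Hc. apply Hgd. lra. }
  assert (RInt (fun x => et x c) a b <= eps) by (apply Hgb; lra).
  assert (RInt (fun x => et x c) a b * (t - 0) <= eps * (t - 0)) by (apply Rmult_le_compat_r; lra).
  lra.
Qed.

Lemma dpl_eq f x l l' : derivable_pt_lim f x l -> l = l' -> derivable_pt_lim f x l'.
Proof. intros H ->; exact H. Qed.

Lemma dpl_plus (A B : R -> R) x la lb : derivable_pt_lim A x la -> derivable_pt_lim B x lb ->
  derivable_pt_lim (fun y => A y + B y) x (la + lb).
Proof. intros; apply (derivable_pt_lim_plus A B); auto. Qed.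
Lemma dpl_minus (A B : R -> R) x la lb : derivable_pt_lim A x la -> derivable_pt_lim B x lb ->
  derivable_pt_lim (fun y => A y - B y) x (la - lb).
Proof. intros; apply (derivable_pt_lim_minus A B); auto. Qed.
Lemma dpl_mult (A B : R -> R) x la lb : derivable_pt_lim A x la -> derivable_pt_lim B x lb ->
  derivable_pt_lim (fun y => A y * B y) x (la * B x + A x * lb).
Proof. intros; apply (derivable_pt_lim_mult A B); auto. Qed.
Lemma dpl_opp (A : R -> R) x la : derivable_pt_lim A x la ->
  derivable_pt_lim (fun y => - A y) x (- la).
Proof. intros; apply (derivable_pt_lim_opp A); auto. Qed.
Lemma dpl_const (c x : R) : derivable_pt_lim (fun _ => c) x 0.
Proof. apply derivable_pt_lim_const. Qed.
Lemma dpl_divc (A : R -> R) c x la : derivable_pt_lim A x la ->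
  derivable_pt_lim (fun y => A y / c) x (la / c).
Proof.
  intros H. apply dpl_eq with (la * / c + A x * 0).
  - apply (dpl_mult A (fun _ => / c)); auto. apply dpl_const.
  - unfold Rdiv. ring.
Qed.
Lemma dpl_pow (A : R -> R) n x la : derivable_pt_lim A x la ->
  derivable_pt_lim (fun y => A y ^ n) x (INR n * A x ^ (pred n) * la).
Proof.
  intros H. apply (derivable_pt_lim_comp A (fun y => y ^ n)); auto.
  apply derivable_pt_lim_pow.
Qed.
Lemma dpl_Rpower (A : R -> R) e x la : 0 < A x -> derivable_pt_lim A x la ->
  derivable_pt_lim (fun y => Rpower (A y) e) x (e * Rpower (A x) (e - 1) * la).
Proof.
  intros Hp H. apply dpl_eq with ((e * Rpower (A x) (e - 1)) * la); [|ring].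
  apply (derivable_pt_lim_comp A (fun y => Rpower y e)); auto.
  apply derivable_pt_lim_power; auto.
Qed.

Ltac dtac :=
  lazymatch goal with
  | |- derivable_pt_lim (fun _ => ?c) _ _ => apply dpl_const
  | |- derivable_pt_lim (fun y => @?A y + @?B y) _ _ => apply (dpl_plus A B); dtac
  | |- derivable_pt_lim (fun y => @?A y - @?B y) _ _ => apply (dpl_minus A B); dtac
  | |- derivable_pt_lim (fun y => @?A y * @?B y) _ _ => apply (dpl_mult A B); dtac
  | |- derivable_pt_lim (fun y => - @?A y) _ _ => apply (dpl_opp A); dtac
  | |- derivable_pt_lim (fun y => @?A y / ?c) _ _ => apply (dpl_divc A c); dtac
  | |- derivable_pt_lim (fun y => @?A y ^ ?n) _ _ => apply (dpl_pow A n); dtac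
  | |- derivable_pt_lim (fun y => Rpower (@?A y) ?e) _ _ =>
      apply (dpl_Rpower A e); [cbv beta; solve [auto] | dtac]
  | |- derivable_pt_lim ?f ?x _ => first [eassumption | fail 2 "leaf" f]
  end.

Lemma rp_pos r e : 0 < Rpower r e.
Proof. unfold Rpower; apply exp_pos. Qed.

Lemma rp_sub r c (n : nat) : 0 < r -> Rpower r (c - INR n) = Rpower r c / r ^ n.
Proof.
  intros Hr. unfold Rminus. rewrite Rpower_plus, Rpower_Ropp, Rpower_pow by auto.
  unfold Rdiv; reflexivity.
Qed.

Lemma rp_m1 r c : 0 < r -> Rpower r (c - 1) = Rpower r c / r.
Proof. intros. replace 1 with (INR 1) by reflexivity. rewrite rp_sub; auto. simpl; field; lra. Qed.
Lemma rp_m2 r c : 0 < r -> Rpower r (c - 2) = Rpower r c / r ^ 2.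
Proof. intros. replace 2 with (INR 2) by (simpl; ring). rewrite rp_sub; auto. Qed.
Lemma rp_m3 r c : 0 < r -> Rpower r (c - 3) = Rpower r c / r ^ 3.
Proof. intros. replace 3 with (INR 3) by (simpl; ring). rewrite rp_sub; auto. Qed.

Goal forall (r u rx ux : R -> R -> R) x t,
  (forall y, 0 < r y t) ->
  derivable_pt_lim (fun y => r y t) x (rx x t) ->
  derivable_pt_lim (fun y => u y t) x (ux x t) ->
  derivable_pt_lim (fun y => r y t * u y t ^ 2 / 2 + Rpower (r y t) 3 - 5) x
    (rx x t * u x t ^ 2 / 2 + r x t * u x t * ux x t + 3 * Rpower (r x t) 2 * rx x t).
Proof.
  intros. eapply dpl_eq. dtac.
  simpl. replace (3 - 1) with 2 by ring. field.
Qed.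

Lemma rp_cont e y : 0 < y -> continuity_pt (fun z => Rpower z e) y.
Proof.
  intros Hy. apply derivable_continuous_pt. exists (e * Rpower y (e - 1)).
  apply derivable_pt_lim_power; auto.
Qed.

Lemma pow_cont n y : continuity_pt (fun z => z ^ n) y.
Proof. apply derivable_continuous_pt. exists (INR n * y ^ pred n). apply derivable_pt_lim_pow. Qed.

Lemma c2d_divc (A : R -> R -> R) c x t : continuity_2d_pt A x t ->
  continuity_2d_pt (fun u v => A u v / c) x t.
Proof.
  intros H. unfold Rdiv. apply (continuity_2d_pt_mult A (fun _ _ => / c)); auto.
  apply continuity_2d_pt_const.
Qed.

Ltac ctac :=
  lazymatch goal with
  | |- continuity_2d_pt (fun _ _ => ?c) _ _ => apply continuity_2d_pt_const
  | |- continuity_2d_pt (fun u v => @?A u v + @?B u v) _ _ => apply (continuity_2d_pt_plus A B); ctac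
  | |- continuity_2d_pt (fun u v => @?A u v - @?B u v) _ _ => apply (continuity_2d_pt_minus A B); ctac
  | |- continuity_2d_pt (fun u v => @?A u v * @?B u v) _ _ => apply (continuity_2d_pt_mult A B); ctac
  | |- continuity_2d_pt (fun u v => - @?A u v) _ _ => apply (continuity_2d_pt_opp A); ctac
  | |- continuity_2d_pt (fun u v => @?A u v / ?c) _ _ => apply (c2d_divc A c); ctac
  | |- continuity_2d_pt (fun u v => @?A u v ^ ?n) _ _ =>
      apply (continuity_1d_2d_pt_comp (fun z => z ^ n) A); [apply pow_cont | ctac]
  | |- continuity_2d_pt (fun u v => Rpower (@?A u v) ?e) _ _ =>
      apply (continuity_1d_2d_pt_comp (fun z => Rpower z e) A); [apply rp_cont; cbv beta; solve [auto] | ctac]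
  | |- continuity_2d_pt ?f ?x ?t => first [solve [eauto] | fail 2 "leaf" f]
  end.

Goal forall (r u : R -> R -> R) a b T,
  (forall x t, 0 < r (clamp a b x) (clamp 0 T t)) ->
  (forall x t, continuity_2d_pt (fun x t => r (clamp a b x) (clamp 0 T t)) x t) ->
  (forall x t, continuity_2d_pt (fun x t => u (clamp a b x) (clamp 0 T t)) x t) ->
  forall x t, continuity_2d_pt (fun x t => (fun x t => r x t * u x t ^ 2 / 2 - Rpower (r x t) 3) (clamp a b x) (clamp 0 T t)) x t.
Proof. intros. cbv beta. ctac. Qed.

Lemma schwarz (f fx ft fxt ftx : R -> R -> R) x0 t0 del :
  0 < del ->
  (forall x t, Rabs (x - x0) < del -> Rabs (t - t0) < del -> derivable_pt_lim (fun y => f y t) x (fx x t)) ->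
  (forall x t, Rabs (x - x0) < del -> Rabs (t - t0) < del -> derivable_pt_lim (fun s => f x s) t (ft x t)) ->
  (forall x t, Rabs (x - x0) < del -> Rabs (t - t0) < del -> derivable_pt_lim (fun s => fx x s) t (fxt x t)) ->
  (forall x t, Rabs (x - x0) < del -> Rabs (t - t0) < del -> derivable_pt_lim (fun y => ft y t) x (ftx x t)) ->
  continuity_2d_pt fxt x0 t0 -> continuity_2d_pt ftx x0 t0 ->
  fxt x0 t0 = ftx x0 t0.
Proof.
  intros Hdel Hfx Hft Hfxt Hftx C1 C2.
  apply Rminus_diag_uniq. apply Rabs_eq_0.
  apply Rle_antisym; [|apply Rabs_pos].
  apply Rnot_lt_le. intros Hlt.
  set (eps := Rabs (fxt x0 t0 - ftx x0 t0)) in *.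
  assert (He2 : 0 < eps / 2) by lra.
  destruct (C1 (mkposreal _ He2)) as [d1 Hd1].
  destruct (C2 (mkposreal _ He2)) as [d2 Hd2]. simpl in Hd1, Hd2.
  set (h := Rmin del (Rmin d1 d2) / 2).
  assert (Hh : 0 < h) by (unfold h; assert (0 < Rmin del (Rmin d1 d2)) by
    (repeat apply Rmin_pos; auto; apply cond_pos); lra).
  assert (Hm1 := Rmin_l del (Rmin d1 d2)). assert (Hm2 := Rmin_r del (Rmin d1 d2)).
  assert (Hm3 := Rmin_l d1 d2). assert (Hm4 := Rmin_r d1 d2).
  assert (Hmp : 0 < Rmin del (Rmin d1 d2)) by (repeat apply Rmin_pos; auto; apply cond_pos).
  assert (Hhd : h < del /\ h < d1 /\ h < d2) by (unfold h; lra).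
  assert (Hab : forall z z0, z0 <= z <= z0 + h -> Rabs (z - z0) <= h)
    by (intros z z0 Hz; rewrite Rabs_right by lra; lra).
  assert (H0 : Rabs (x0 - x0) <= h) by (rewrite Rminus_eq_0, Rabs_R0; lra).
  assert (H0' : Rabs (t0 - t0) <= h) by (rewrite Rminus_eq_0, Rabs_R0; lra).
  assert (Hh1 : Rabs (x0 + h - x0) <= h) by (apply Hab; lra).
  assert (Hh2 : Rabs (t0 + h - t0) <= h) by (apply Hab; lra).
  destruct (MVT_cor2 (fun y => f y (t0 + h) - f y t0) (fun y => fx y (t0 + h) - fx y t0) x0 (x0 + h))
    as [xi [E1 Hxi]]; [lra| |].
  { intros c Hc. assert (Rabs (c - x0) <= h) by (apply Hab; lra).
    apply (dpl_minus (fun y => f y (t0 + h)) (fun y => f y t0)); apply Hfx; lra. }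
  assert (Hxi' : Rabs (xi - x0) <= h) by (apply Hab; lra).
  destruct (MVT_cor2 (fun s => fx xi s) (fun s => fxt xi s) t0 (t0 + h)) as [eta [E2 Heta]]; [lra| |].
  { intros c Hc. assert (Rabs (c - t0) <= h) by (apply Hab; lra). apply Hfxt; lra. }
  assert (Heta' : Rabs (eta - t0) <= h) by (apply Hab; lra).
  destruct (MVT_cor2 (fun s => f (x0 + h) s - f x0 s) (fun s => ft (x0 + h) s - ft x0 s) t0 (t0 + h))
    as [eta2 [E3 Heta2]]; [lra| |].
  { intros c Hc. assert (Rabs (c - t0) <= h) by (apply Hab; lra).
    apply (dpl_minus (fun s => f (x0 + h) s) (fun s => f x0 s)); apply Hft; lra. }
  assert (Heta2' : Rabs (eta2 - t0) <= h) by (apply Hab; lra).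
  destruct (MVT_cor2 (fun y => ft y eta2) (fun y => ftx y eta2) x0 (x0 + h)) as [xi2 [E4 Hxi2]]; [lra| |].
  { intros c Hc. assert (Rabs (c - x0) <= h) by (apply Hab; lra). apply Hftx; lra. }
  assert (Hxi2' : Rabs (xi2 - x0) <= h) by (apply Hab; lra).
  assert (Heq : fxt xi eta * h * h = ftx xi2 eta2 * h * h).
  { replace (x0 + h - x0) with h in E1, E4 by ring.
    replace (t0 + h - t0) with h in E2, E3 by ring.
    rewrite E2 in E1. rewrite E4 in E3.
    assert (f (x0 + h) (t0 + h) - f (x0 + h) t0 - (f x0 (t0 + h) - f x0 t0) =
            f (x0 + h) (t0 + h) - f x0 (t0 + h) - (f (x0 + h) t0 - f x0 t0)) by ring.
    lra. }
  assert (Heq' : fxt xi eta = ftx xi2 eta2).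
  { apply Rmult_eq_reg_r with (h * h). rewrite <- !Rmult_assoc. exact Heq.
    apply Rgt_not_eq. apply Rmult_lt_0_compat; lra. }
  assert (A1 : Rabs (fxt xi eta - fxt x0 t0) < eps / 2) by (apply Hd1; lra).
  assert (A2 : Rabs (ftx xi2 eta2 - ftx x0 t0) < eps / 2) by (apply Hd2; lra).
  rewrite Heq' in A1.
  assert (Rabs (fxt x0 t0 - ftx x0 t0) <= Rabs (ftx xi2 eta2 - fxt x0 t0) + Rabs (ftx xi2 eta2 - ftx x0 t0)).
  { replace (fxt x0 t0 - ftx x0 t0) with (-(ftx xi2 eta2 - fxt x0 t0) + (ftx xi2 eta2 - ftx x0 t0)) by ring.
    eapply Rle_trans; [apply Rabs_triang|]. rewrite Rabs_Ropp. lra. }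
  unfold eps in *. lra.
Qed.

Definition Xint (X : R -> Prop) x := exists d, 0 < d /\ forall y, Rabs (y - x) < d -> X y.

Lemma Xint_near X x : Xint X x -> exists d, 0 < d /\ forall y, Rabs (y - x) < d -> Xint X y.
Proof.
  intros [d [Hd H]]. exists (d / 2). split; [lra|]. intros y Hy. exists (d / 2). split; [lra|].
  intros z Hz. apply H. revert Hy Hz. unfold Rabs; repeat destruct Rcase_abs; lra.
Qed.

Lemma pdx_dpl' (D : R -> R -> Prop) X T f x t l :
  (forall x t, D x t <-> X x /\ 0 <= t <= T) ->
  Xint X x -> 0 <= t <= T -> pdx D f x t l -> derivable_pt_lim (fun y => f y t) x l.
Proof.
  intros HD [d [Hd HX]] Ht H. apply (pdx_dpl D X T f x t l (x - d / 2) (x + d / 2)); auto; try lra.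
  intros y Hy. apply HX. revert Hy. unfold Rabs; destruct Rcase_abs; lra.
Qed.

Lemma dpl_ext f g x l : (forall y, g y = f y) -> derivable_pt_lim f x l -> derivable_pt_lim g x l.
Proof. intros H1 H2. apply dpl_local with f; auto. exists 1; split; [lra|auto]. Qed.

Lemma cont_on_c2d (D : R -> R -> Prop) f x t d : 0 < d ->
  (forall y s, Rabs (y - x) < d -> Rabs (s - t) < d -> D y s) ->
  cont_on D f -> continuity_2d_pt f x t.
Proof.
  intros Hd HD Hc eps. destruct (Hc x t) with (eps := pos eps) as [del [Hdel H]].
  { apply HD; rewrite Rminus_eq_0, Rabs_R0; lra. }
  { apply cond_pos. }
  assert (Hm : 0 < Rmin del d) by (apply Rmin_pos; lra).
  exists (mkposreal _ Hm). simpl. intros u v Hu Hv.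
  assert (H1 := Rmin_l del d). assert (H2 := Rmin_r del d).
  apply H; try lra. apply HD; lra.
Qed.

Record Good (X : R -> Prop) (T gamma alpha : R) (r rx rt rxx rxt u ux ut uxx : R -> R -> R) : Prop := {
  g_pos : forall x t, X x -> 0 <= t <= T -> 0 < r x t;
  g_dx : forall x t, Xint X x -> 0 <= t <= T ->
     derivable_pt_lim (fun y => r y t) x (rx x t) /\
     derivable_pt_lim (fun y => rx y t) x (rxx x t) /\
     derivable_pt_lim (fun y => u y t) x (ux x t) /\
     derivable_pt_lim (fun y => ux y t) x (uxx x t);
  g_dt : forall x t, X x -> 0 < t < T ->
     derivable_pt_lim (fun s => r x s) t (rt x t) /\
     derivable_pt_lim (fun s => rx x s) t (rxt x t) /\
     derivable_pt_lim (fun s => u x s) t (ut x t);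
  g_cont : forall x t, Xint X x -> 0 < t < T ->
     rt x t = - (rx x t * u x t + r x t * ux x t);
  g_xt : forall x t, Xint X x -> 0 < t < T ->
     rxt x t = - (rxx x t * u x t + 2 * rx x t * ux x t + r x t * uxx x t);
  g_mom : forall x t, Xint X x -> 0 < t < T ->
     rt x t * u x t + r x t * ut x t + (rx x t * u x t ^ 2 + r x t * (2 * u x t * ux x t))
     + gamma * Rpower (r x t) (gamma - 1) * rx x t
     = alpha * Rpower (r x t) (alpha - 1) * rx x t * ux x t + Rpower (r x t) alpha * uxx x t
}.

Lemma cont_on_ext (D : R -> R -> Prop) f g : (forall x t, g x t = f x t) -> cont_on D f -> cont_on D g.
Proof.
  intros H Hc x t Hxt eps Heps. destruct (Hc x t Hxt eps Heps) as [d [Hd H1]].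
  exists d; split; auto. intros; rewrite !H; auto.
Qed.

Lemma build (D : R -> R -> Prop) X T gamma alpha rho u f c (P Q : (R -> R -> R) -> Prop) :
  (forall x t, D x t <-> X x /\ 0 <= t <= T) -> 0 < T ->
  (forall x t, f x t = rho x t - c) ->
  is_solution D gamma alpha rho u -> smooth_on D P f -> smooth_on D Q u ->
  exists rx rt rxx rxt ux ut uxx,
    Good X T gamma alpha rho rx rt rxx rxt u ux ut uxx /\
    cont_on D rho /\ cont_on D rx /\ cont_on D rt /\ cont_on D rxx /\ cont_on D rxt /\
    cont_on D u /\ cont_on D ux /\ cont_on D ut /\ cont_on D uxx /\ P rx /\ Q ux.
Proof.
  intros HD HT Hf Hsol Hs Hsu.
  destruct Hs as [fx ft Pf Cf Hfx Hft Sfx Sft].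
  destruct Sfx as [fxx fxt Pfx Cfx Hfxx Hfxt Sfxx Sfxt].
  destruct Sft as [ftx ftt Pft Cft Hftx Hftt Sftx _].
  destruct Sftx as [? ? _ Cftx _ _ _ _].
  destruct Sfxx as [? ? _ Cfxx _ _ _ _].
  destruct Sfxt as [? ? _ Cfxt _ _ _ _].
  destruct Hsu as [ux ut Pu Cu Hux Hut Sux Sut].
  destruct Sux as [uxx uxt Pux Cux Huxx Huxt Suxx _].
  destruct Suxx as [? ? _ Cuxx _ _ _ _].
  destruct Sut as [? ? _ Cut _ _ _ _].
  destruct Hsol as [Hpos [Hmass [uxs [Huxs Hmom]]]].
  assert (HDi : forall x t, Xint X x -> 0 <= t <= T -> D x t).
  { intros x t [d [Hd HX]] Ht. apply HD. split; auto. apply HX. rewrite Rminus_eq_0, Rabs_R0; auto. }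
  assert (HDx : forall x t, X x -> 0 <= t <= T -> D x t) by (intros; apply HD; auto).
  assert (Crho : cont_on D rho).
  { apply cont_on_ext with (fun x t => f x t + c); [intros; rewrite Hf; ring|].
    intros x t Hxt eps Heps. destruct (Cf x t Hxt eps Heps) as [d [Hd H1]].
    exists d; split; auto. intros. replace (f y s + c - (f x t + c)) with (f y s - f x t) by ring. auto. }
  assert (DX : forall x t, Xint X x -> 0 <= t <= T ->
     derivable_pt_lim (fun y => rho y t) x (fx x t) /\
     derivable_pt_lim (fun y => fx y t) x (fxx x t) /\
     derivable_pt_lim (fun y => u y t) x (ux x t) /\
     derivable_pt_lim (fun y => ux y t) x (uxx x t) /\
     derivable_pt_lim (fun y => ft y t) x (ftx x t)).
  { intros x t Hx Ht. repeat split.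
    - apply dpl_ext with (fun y => f y t + c); [intros; rewrite Hf; ring|].
      apply dpl_eq with (fx x t + 0); [|ring]. apply (dpl_plus (fun y => f y t) (fun _ => c)).
      + apply (pdx_dpl' D X T); auto.
      + apply dpl_const.
    - apply (pdx_dpl' D X T); auto.
    - apply (pdx_dpl' D X T); auto.
    - apply (pdx_dpl' D X T); auto.
    - apply (pdx_dpl' D X T); auto. }
  assert (DT : forall x t, X x -> 0 < t < T ->
     derivable_pt_lim (fun s => rho x s) t (ft x t) /\
     derivable_pt_lim (fun s => fx x s) t (fxt x t) /\
     derivable_pt_lim (fun s => u x s) t (ut x t)).
  { intros x t Hx Ht. repeat split.
    - apply dpl_ext with (fun s => f x s + c); [intros; rewrite Hf; ring|].
      apply dpl_eq with (ft x t + 0); [|ring]. apply (dpl_plus (fun s => f x s) (fun _ => c)).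
      + apply (pdt_dpl D X T); auto; first [apply Hft|apply Hfxt|apply Hut]; apply HDx; auto; lra.
      + apply dpl_const.
    - apply (pdt_dpl D X T); auto; first [apply Hft|apply Hfxt|apply Hut]; apply HDx; auto; lra.
    - apply (pdt_dpl D X T); auto; first [apply Hft|apply Hfxt|apply Hut]; apply HDx; auto; lra. }
  assert (Xx : forall x, Xint X x -> X x).
  { intros x [d [Hd HX]]. apply HX. rewrite Rminus_eq_0, Rabs_R0; auto. }
  assert (GC : forall x t, Xint X x -> 0 < t < T -> ft x t = - (fx x t * u x t + rho x t * ux x t)).
  { intros x t Hx Ht. destruct (Hmass x t (HDi x t Hx ltac:(lra))) as [a [b [Ha [Hb Hab]]]].
    apply (pdt_dpl D X T) in Ha; auto.
    apply (pdx_dpl' D X T) in Hb; auto; try lra.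
    destruct (DX x t Hx ltac:(lra)) as [D1 [D2 [D3 [D4 D5]]]].
    destruct (DT x t (Xx x Hx) Ht) as [T1 [T2 T3]].
    assert (a = ft x t) by (eapply uniqueness_limite; eauto).
    assert (b = fx x t * u x t + rho x t * ux x t).
    { eapply uniqueness_limite; [exact Hb|]. apply (dpl_mult (fun y => rho y t) (fun y => u y t)); auto. }
    lra. }
  exists fx, ft, fxx, fxt, ux, ut, uxx.
  split; [|repeat split; auto].
  split.
  - intros; apply Hpos; auto.
  - intros x t Hx Ht. destruct (DX x t Hx Ht) as [? [? [? [? ?]]]]. auto.
  - intros x t Hx Ht. destruct (DT x t Hx Ht) as [? [? ?]]. auto.
  - exact GC.
  - intros x t Hx Ht.
    destruct (Xint_near X x Hx) as [d1 [Hd1 Hnear]].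
    set (del := Rmin d1 (Rmin t (T - t))).
    assert (Hdel : 0 < del) by (unfold del; repeat apply Rmin_pos; lra).
    assert (Hm1 := Rmin_l d1 (Rmin t (T - t))). assert (Hm2 := Rmin_r d1 (Rmin t (T - t))).
    assert (Hm3 := Rmin_l t (T - t)). assert (Hm4 := Rmin_r t (T - t)).
    assert (Hball : forall y s, Rabs (y - x) < del -> Rabs (s - t) < del -> Xint X y /\ 0 < s < T).
    { intros y s Hy Hs. split; [apply Hnear; unfold del in *; lra|].
      revert Hs; unfold del in *; unfold Rabs; destruct Rcase_abs; lra. }
    assert (HS : fxt x t = ftx x t).
    { apply (schwarz rho fx ft fxt ftx x t del Hdel).
      - intros y s Hy Hs. destruct (Hball y s Hy Hs). destruct (DX y s H ltac:(lra)) as [D1 _]; exact D1.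
      - intros y s Hy Hs. destruct (Hball y s Hy Hs). destruct (DT y s (Xx y H) H0) as [T1 _]; exact T1.
      - intros y s Hy Hs. destruct (Hball y s Hy Hs). destruct (DT y s (Xx y H) H0) as [_ [T2 _]]; exact T2.
      - intros y s Hy Hs. destruct (Hball y s Hy Hs). destruct (DX y s H ltac:(lra)) as [_ [_ [_ [_ D5]]]]; exact D5.
      - apply (cont_on_c2d D _ x t del); auto. intros y s Hy Hs. destruct (Hball y s Hy Hs).
        apply HDi; auto; lra.
      - apply (cont_on_c2d D _ x t del); auto. intros y s Hy Hs. destruct (Hball y s Hy Hs).
        apply HDi; auto; lra. }
    rewrite HS. eapply uniqueness_limite.
    + destruct (DX x t Hx ltac:(lra)) as [_ [_ [_ [_ D5]]]]; exact D5.
    + apply (dpl_local (fun y => - (fx y t * u y t + rho y t * ux y t)) (fun y => ft y t)).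
      * exists d1. split; [exact Hd1| intros z Hz; apply GC; auto].
      * destruct (DX x t Hx ltac:(lra)) as [D1 [D2 [D3 [D4 D5]]]].
        eapply dpl_eq; [dtac|]. ring.
  - intros x t Hx Ht.
    destruct (Hmom x t (HDi x t Hx ltac:(lra))) as [a [b [c' [Ha [Hb [Hc Habc]]]]]].
    apply (pdt_dpl D X T) in Ha; auto.
    apply (pdx_dpl' D X T) in Hb; auto; try lra.
    apply (pdx_dpl' D X T) in Hc; auto; try lra.
    destruct (DX x t Hx ltac:(lra)) as [D1 [D2 [D3 [D4 D5]]]].
    destruct (DT x t (Xx x Hx) Ht) as [T1 [T2 T3]].
    assert (Hp : forall y, Xint X y -> 0 < rho y t) by (intros; apply Hpos; apply HDi; auto; lra).
    assert (Hpx : 0 < rho x t) by auto.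
    assert (a = ft x t * u x t + rho x t * ut x t).
    { eapply uniqueness_limite; [exact Ha|]. apply (dpl_mult (fun s => rho x s) (fun s => u x s)); auto. }
    assert (b = fx x t * u x t ^ 2 + rho x t * (2 * u x t * ux x t) + gamma * Rpower (rho x t) (gamma - 1) * fx x t).
    { eapply uniqueness_limite; [exact Hb|]. eapply dpl_eq; [dtac|]. simpl. ring. }
    assert (c' = alpha * Rpower (rho x t) (alpha - 1) * fx x t * ux x t + Rpower (rho x t) alpha * uxx x t).
    { eapply uniqueness_limite; [exact Hc|].
      apply dpl_local with (fun y => Rpower (rho y t) alpha * ux y t).
      - destruct (Xint_near X x Hx) as [d1 [Hd1 Hnear]]. exists d1. split; [exact Hd1|]. intros z Hz.
        assert (Hz' : Xint X z) by auto.
        f_equal. eapply uniqueness_limite.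
        + apply (pdx_dpl' D X T u z t); auto; [lra|]. apply Huxs. apply HDi; auto; lra.
        + destruct (DX z t Hz' ltac:(lra)) as [_ [_ [E3 _]]]; exact E3.
      - eapply dpl_eq; [dtac|]. ring. }
    lra.
Qed.

Definition Gf g A B r := (Rpower r g - A - B * r) / (g - 1).
Definition Gp g B r := (g * Rpower r (g - 1) - B) / (g - 1).
Definition Een g A B r u := r * u ^ 2 / 2 + Gf g A B r.
Definition Fen g al A B r u ux :=
  r * u ^ 3 / 2 + Gf g A B r * u + (Rpower r g + A / (g - 1)) * u - Rpower r al * u * ux.
Definition Eten g B r rt u ut := rt * u ^ 2 / 2 + r * (2 * u * ut) / 2 + Gp g B r * rt.
Definition Fxen g al A B r rx u ux uxx :=
  rx * u ^ 3 / 2 + r * (3 * u ^ 2 * ux) / 2 + Gp g B r * rx * u + Gf g A B r * ux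
  + g * Rpower r (g - 1) * rx * u + (Rpower r g + A / (g - 1)) * ux
  - (al * Rpower r (al - 1) * rx * u * ux + Rpower r al * ux * ux + Rpower r al * u * uxx).

Definition wv al r rx := Rpower r (al - 2) * rx.
Definition Ebd g al A B r rx u := r * (u + wv al r rx) ^ 2 / 2 + Gf g A B r.
Definition Fbd g al A B r rx u :=
  r * u * (u + wv al r rx) ^ 2 / 2 + Gf g A B r * u + (Rpower r g + A / (g - 1)) * u.
Definition Etbd g al B r rx rt rxt u ut :=
  rt * (u + wv al r rx) ^ 2 / 2
  + r * (2 * (u + wv al r rx) * (ut + ((al - 2) * Rpower r (al - 3) * rt * rx + Rpower r (al - 2) * rxt))) / 2
  + Gp g B r * rt.
Definition Fxbd g al A B r rx rxx u ux :=
  (rx * u + r * ux) * (u + wv al r rx) ^ 2 / 2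
  + r * u * (2 * (u + wv al r rx) * (ux + ((al - 2) * Rpower r (al - 3) * rx * rx + Rpower r (al - 2) * rxx))) / 2
  + Gp g B r * rx * u + Gf g A B r * ux + g * Rpower r (g - 1) * rx * u + (Rpower r g + A / (g - 1)) * ux.

Lemma id_en g al A B r rx rt u ux ut uxx : 0 < r -> 1 < g ->
  rt = - (rx * u + r * ux) ->
  rt * u + r * ut + (rx * u ^ 2 + r * (2 * u * ux)) + g * Rpower r (g - 1) * rx
     = al * Rpower r (al - 1) * rx * ux + Rpower r al * uxx ->
  Eten g B r rt u ut + Fxen g al A B r rx u ux uxx = - (Rpower r al * ux ^ 2).
Proof.
  intros Hr Hg Hrt Hm. unfold Eten, Fxen, Gp, Gf in *.
  rewrite !rp_m1 in * by auto.
  set (P := Rpower r al) in *. set (Q := Rpower r g) in *.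
  assert (HW : r * ut = al * (P / r) * rx * ux + P * uxx - rt * u - (rx * u ^ 2 + r * (2 * u * ux)) - g * (Q / r) * rx) by lra.
  replace ut with ((r * ut) / r) by (field; lra). rewrite HW. rewrite Hrt.
  field. lra.
Qed.

Lemma id_bd g al A B r rx rt rxx rxt u ux ut uxx : 0 < r -> 1 < g ->
  rt = - (rx * u + r * ux) ->
  rxt = - (rxx * u + 2 * rx * ux + r * uxx) ->
  rt * u + r * ut + (rx * u ^ 2 + r * (2 * u * ux)) + g * Rpower r (g - 1) * rx
     = al * Rpower r (al - 1) * rx * ux + Rpower r al * uxx ->
  Etbd g al B r rx rt rxt u ut + Fxbd g al A B r rx rxx u ux
    = - (g * Rpower r (g - 1) * rx * wv al r rx).
Proof.
  intros Hr Hg Hrt Hrxt Hm. unfold Etbd, Fxbd, wv, Gp, Gf in *.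
  rewrite ?rp_m1, ?rp_m2, ?rp_m3 in * by auto.
  set (P := Rpower r al) in *. set (Q := Rpower r g) in *.
  assert (HW : r * ut = al * (P / r) * rx * ux + P * uxx - rt * u - (rx * u ^ 2 + r * (2 * u * ux)) - g * (Q / r) * rx) by lra.
  replace ut with ((r * ut) / r) by (field; lra). rewrite HW. rewrite Hrxt, Hrt.
  field. lra.
Qed.

Lemma clamp_data (D : R -> R -> Prop) X T a b f :
  (forall x t, D x t <-> X x /\ 0 <= t <= T) -> a < b -> (forall y, a <= y <= b -> X y) -> 0 < T ->
  cont_on D f -> forall x t, continuity_2d_pt (fun x t => f (clamp a b x) (clamp 0 T t)) x t.
Proof. intros; apply (cont_clamp D X T); auto; lra. Qed.

Ltac prep_rect HD Hab HX HT :=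
  repeat match goal with
  | H : cont_on _ ?f |- _ =>
      let C := fresh "C" in
      pose proof (clamp_data _ _ _ _ _ f HD Hab HX HT H) as C; clear H
  end.

Lemma energy_en (D : R -> R -> Prop) X T g al A B a b r rx rt rxx rxt u ux ut uxx eps :
  (forall x t, D x t <-> X x /\ 0 <= t <= T) -> a < b -> 0 < T ->
  (forall y, a <= y <= b -> X y) -> 1 < g ->
  Good X T g al r rx rt rxx rxt u ux ut uxx ->
  cont_on D r -> cont_on D rx -> cont_on D rt -> cont_on D u -> cont_on D ux -> cont_on D ut -> cont_on D uxx ->
  (forall t, 0 < t < T -> Fen g al A B (r a t) (u a t) (ux a t) - Fen g al A B (r b t) (u b t) (ux b t) <= eps) ->
  forall t, 0 <= t <= T ->
    RInt (fun x => Een g A B (r x t) (u x t)) a b <= RInt (fun x => Een g A B (r x 0) (u x 0)) a b + eps * t.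
Proof.
  intros HD Hab HT HX Hg HG Cr Crx Crt Cu Cux Cut Cuxx Hflux.
  assert (Pr : forall x t, 0 < r (clamp a b x) (clamp 0 T t)).
  { intros. apply (g_pos _ _ _ _ _ _ _ _ _ _ _ _ _ HG); [apply HX|]; apply clamp_in; lra. }
  prep_rect HD Hab HX HT.
  assert (Hg1 : g - 1 <> 0) by lra.
  apply (energy_ineq (fun x t => Een g A B (r x t) (u x t)) (fun x t => Eten g B (r x t) (rt x t) (u x t) (ut x t))
    (fun x t => Fen g al A B (r x t) (u x t) (ux x t)) (fun x t => Fxen g al A B (r x t) (rx x t) (u x t) (ux x t) (uxx x t))
    a b T eps); auto.
  - intros; cbv beta; unfold Een, Gf; ctac.
  - intros; cbv beta; unfold Eten, Gp; ctac.
  - intros t Ht; apply (c2d_ccont (fun x t => Fen g al A B (r x t) (u x t) (ux x t)) a b T t); [lra|lra|].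
    intros; cbv beta; unfold Fen, Gf; ctac.
  - intros t Ht; apply (c2d_ccont (fun x t => Fxen g al A B (r x t) (rx x t) (u x t) (ux x t) (uxx x t)) a b T t); [lra|lra|].
    intros; cbv beta; unfold Fxen, Gp, Gf; ctac.
  - intros x t Hx Ht. destruct (g_dt _ _ _ _ _ _ _ _ _ _ _ _ _ HG x t (HX x Hx) Ht) as [T1 [T2 T3]].
    assert (Hr : 0 < r x t) by (apply (g_pos _ _ _ _ _ _ _ _ _ _ _ _ _ HG); auto; lra).
    unfold Een, Eten, Gf, Gp. eapply dpl_eq; [dtac|]. simpl. field. exact Hg1.
  - intros x t Hx Ht.
    assert (Hxi : Xint X x).
    { exists (Rmin (x - a) (b - x)). split; [apply Rmin_pos; lra|]. intros y Hy. apply HX.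
      assert (H1 := Rmin_l (x - a) (b - x)). assert (H2 := Rmin_r (x - a) (b - x)).
      revert Hy; unfold Rabs; destruct Rcase_abs; lra. }
    destruct (g_dx _ _ _ _ _ _ _ _ _ _ _ _ _ HG x t Hxi ltac:(lra)) as [D1 [D2 [D3 D4]]].
    assert (Hr : 0 < r x t) by (apply (g_pos _ _ _ _ _ _ _ _ _ _ _ _ _ HG); [apply HX|]; lra).
    unfold Fen, Fxen, Gf, Gp. eapply dpl_eq; [dtac|]. simpl. field. exact Hg1.
  - intros x t Hx Ht.
    assert (Hxi : Xint X x).
    { exists (Rmin (x - a) (b - x)). split; [apply Rmin_pos; lra|]. intros y Hy. apply HX.
      assert (H1 := Rmin_l (x - a) (b - x)). assert (H2 := Rmin_r (x - a) (b - x)).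
      revert Hy; unfold Rabs; destruct Rcase_abs; lra. }
    assert (Hr : 0 < r x t) by (apply (g_pos _ _ _ _ _ _ _ _ _ _ _ _ _ HG); [apply HX|]; lra).
    rewrite (id_en g al A B _ _ _ _ _ _ _ Hr Hg).
    + assert (0 <= Rpower (r x t) al * ux x t ^ 2) by (apply Rmult_le_pos; [left; apply rp_pos| apply pow2_ge_0]). lra.
    + apply (g_cont _ _ _ _ _ _ _ _ _ _ _ _ _ HG); auto.
    + apply (g_mom _ _ _ _ _ _ _ _ _ _ _ _ _ HG); auto.
Qed.

Lemma Xint_ab X a b x : (forall y, a <= y <= b -> X y) -> a < x < b -> Xint X x.
Proof.
  intros HX Hx. exists (Rmin (x - a) (b - x)). split; [apply Rmin_pos; lra|]. intros y Hy. apply HX.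
  assert (H1 := Rmin_l (x - a) (b - x)). assert (H2 := Rmin_r (x - a) (b - x)).
  revert Hy; unfold Rabs; destruct Rcase_abs; lra.
Qed.

Lemma energy_bd (D : R -> R -> Prop) X T g al A B a b r rx rt rxx rxt u ux ut uxx eps :
  (forall x t, D x t <-> X x /\ 0 <= t <= T) -> a < b -> 0 < T ->
  (forall y, a <= y <= b -> X y) -> 1 < g ->
  Good X T g al r rx rt rxx rxt u ux ut uxx ->
  cont_on D r -> cont_on D rx -> cont_on D rt -> cont_on D rxx -> cont_on D rxt ->
  cont_on D u -> cont_on D ux -> cont_on D ut ->
  (forall t, 0 < t < T -> Fbd g al A B (r a t) (rx a t) (u a t) - Fbd g al A B (r b t) (rx b t) (u b t) <= eps) ->
  forall t, 0 <= t <= T ->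
    RInt (fun x => Ebd g al A B (r x t) (rx x t) (u x t)) a b
      <= RInt (fun x => Ebd g al A B (r x 0) (rx x 0) (u x 0)) a b + eps * t.
Proof.
  intros HD Hab HT HX Hg HG Cr Crx Crt Crxx Crxt Cu Cux Cut Hflux.
  assert (Pr : forall x t, 0 < r (clamp a b x) (clamp 0 T t)).
  { intros. apply (g_pos _ _ _ _ _ _ _ _ _ _ _ _ _ HG); [apply HX|]; apply clamp_in; lra. }
  prep_rect HD Hab HX HT.
  assert (Hg1 : g - 1 <> 0) by lra.
  apply (energy_ineq (fun x t => Ebd g al A B (r x t) (rx x t) (u x t))
    (fun x t => Etbd g al B (r x t) (rx x t) (rt x t) (rxt x t) (u x t) (ut x t))
    (fun x t => Fbd g al A B (r x t) (rx x t) (u x t))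
    (fun x t => Fxbd g al A B (r x t) (rx x t) (rxx x t) (u x t) (ux x t))
    a b T eps); auto.
  - intros; cbv beta; unfold Ebd, wv, Gf; ctac.
  - intros; cbv beta; unfold Etbd, wv, Gp; ctac.
  - intros t Ht; apply (c2d_ccont (fun x t => Fbd g al A B (r x t) (rx x t) (u x t)) a b T t); [lra|lra|].
    intros; cbv beta; unfold Fbd, wv, Gf; ctac.
  - intros t Ht; apply (c2d_ccont (fun x t => Fxbd g al A B (r x t) (rx x t) (rxx x t) (u x t) (ux x t)) a b T t); [lra|lra|].
    intros; cbv beta; unfold Fxbd, wv, Gp, Gf; ctac.
  - intros x t Hx Ht. destruct (g_dt _ _ _ _ _ _ _ _ _ _ _ _ _ HG x t (HX x Hx) Ht) as [T1 [T2 T3]].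
    assert (Hr : 0 < r x t) by (apply (g_pos _ _ _ _ _ _ _ _ _ _ _ _ _ HG); auto; lra).
    unfold Ebd, Etbd, wv, Gf, Gp. eapply dpl_eq; [dtac|].
    replace (al - 2 - 1) with (al - 3) by ring. simpl. field. exact Hg1.
  - intros x t Hx Ht. assert (Hxi := Xint_ab X a b x HX Hx).
    destruct (g_dx _ _ _ _ _ _ _ _ _ _ _ _ _ HG x t Hxi ltac:(lra)) as [D1 [D2 [D3 D4]]].
    assert (Hr : 0 < r x t) by (apply (g_pos _ _ _ _ _ _ _ _ _ _ _ _ _ HG); [apply HX|]; lra).
    unfold Fbd, Fxbd, wv, Gf, Gp. eapply dpl_eq; [dtac|].
    replace (al - 2 - 1) with (al - 3) by ring. simpl. field. exact Hg1.
  - intros x t Hx Ht. assert (Hxi := Xint_ab X a b x HX Hx).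
    assert (Hr : 0 < r x t) by (apply (g_pos _ _ _ _ _ _ _ _ _ _ _ _ _ HG); [apply HX|]; lra).
    cbv beta. rewrite (id_bd g al A B (r x t) (rx x t) (rt x t) (rxx x t) (rxt x t) (u x t) (ux x t) (ut x t) (uxx x t) Hr Hg).
    + unfold wv. rewrite rp_m1, rp_m2 by auto.
      assert (0 <= g * (Rpower (r x t) g / r x t) * rx x t * (Rpower (r x t) al / r x t ^ 2 * rx x t)).
      { replace (g * (Rpower (r x t) g / r x t) * rx x t * (Rpower (r x t) al / r x t ^ 2 * rx x t))
          with ((g * Rpower (r x t) g * Rpower (r x t) al / r x t ^ 3) * (rx x t) ^ 2) by (field; lra).
        apply Rmult_le_pos; [|apply pow2_ge_0].
        assert (0 < Rpower (r x t) g) by apply rp_pos. assert (0 < Rpower (r x t) al) by apply rp_pos.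
        unfold Rdiv. apply Rmult_le_pos; [|left; apply Rinv_0_lt_compat; apply pow_lt; auto].
        apply Rmult_le_pos; [apply Rmult_le_pos|]; lra. }
      lra.
    + apply (g_cont _ _ _ _ _ _ _ _ _ _ _ _ _ HG); auto.
    + apply (g_xt _ _ _ _ _ _ _ _ _ _ _ _ _ HG); auto.
    + apply (g_mom _ _ _ _ _ _ _ _ _ _ _ _ _ HG); auto.
Qed.

Lemma mass_eq (D : R -> R -> Prop) X T g al a b r rx rt rxx rxt u ux ut uxx sg eps :
  (forall x t, D x t <-> X x /\ 0 <= t <= T) -> a < b -> 0 < T ->
  (forall y, a <= y <= b -> X y) ->
  Good X T g al r rx rt rxx rxt u ux ut uxx ->
  cont_on D r -> cont_on D rx -> cont_on D rt -> cont_on D u -> cont_on D ux ->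
  (forall t, 0 < t < T -> sg * (r a t * u a t) - sg * (r b t * u b t) <= eps) ->
  forall t, 0 <= t <= T ->
    RInt (fun x => sg * r x t) a b <= RInt (fun x => sg * r x 0) a b + eps * t.
Proof.
  intros HD Hab HT HX HG Cr Crx Crt Cu Cux Hflux.
  prep_rect HD Hab HX HT.
  apply (energy_ineq (fun x t => sg * r x t) (fun x t => sg * rt x t)
    (fun x t => sg * (r x t * u x t)) (fun x t => sg * (rx x t * u x t + r x t * ux x t))
    a b T eps); auto.
  - intros; cbv beta; ctac.
  - intros; cbv beta; ctac.
  - intros t Ht; apply (c2d_ccont (fun x t => sg * (r x t * u x t)) a b T t); [lra|lra|].
    intros; cbv beta; ctac.
  - intros t Ht; apply (c2d_ccont (fun x t => sg * (rx x t * u x t + r x t * ux x t)) a b T t); [lra|lra|].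
    intros; cbv beta; ctac.
  - intros x t Hx Ht. destruct (g_dt _ _ _ _ _ _ _ _ _ _ _ _ _ HG x t (HX x Hx) Ht) as [T1 [T2 T3]].
    eapply dpl_eq; [dtac|]. ring.
  - intros x t Hx Ht. assert (Hxi := Xint_ab X a b x HX Hx).
    destruct (g_dx _ _ _ _ _ _ _ _ _ _ _ _ _ HG x t Hxi ltac:(lra)) as [D1 [D2 [D3 D4]]].
    eapply dpl_eq; [dtac|]. ring.
  - intros x t Hx Ht. assert (Hxi := Xint_ab X a b x HX Hx).
    rewrite (g_cont _ _ _ _ _ _ _ _ _ _ _ _ _ HG); auto. lra.
Qed.

Lemma rp_le_pos x y e : 0 < x <= y -> 0 <= e -> Rpower x e <= Rpower y e.
Proof. intros; apply Rle_Rpower_l; auto. Qed.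

Lemma rp_le_neg x y e : 0 < x <= y -> e <= 0 -> Rpower y e <= Rpower x e.
Proof.
  intros Hxy He. replace e with (- (- e)) by ring. rewrite (Rpower_Ropp y (- e)), (Rpower_Ropp x (- e)).
  assert (0 < Rpower x (- e)) by apply rp_pos.
  apply Rinv_le_contravar; auto. apply rp_le_pos; auto; lra.
Qed.

Lemma rp_lt_pos x y e : 0 < x < y -> 0 < e -> Rpower x e < Rpower y e.
Proof. intros; apply Rlt_Rpower_l; auto. Qed.

Lemma rp_pp x e f : Rpower (Rpower x e) f = Rpower x (e * f).
Proof. apply Rpower_mult. Qed.

Lemma rp_inv x e : 0 < x -> e <> 0 -> Rpower (Rpower x e) (/ e) = x.
Proof. intros. rewrite rp_pp. replace (e * / e) with 1 by (field; auto). apply Rpower_1; auto. Qed.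

Lemma rp_sq x e : Rpower x (2 * e) = Rpower x e ^ 2.
Proof. replace (2 * e) with (e + e) by ring. rewrite Rpower_plus. ring. Qed.

Lemma rp_mul x y e : 0 < x -> 0 < y -> Rpower (x * y) e = Rpower x e * Rpower y e.
Proof. intros; rewrite Rpower_mult_distr; auto. Qed.

Lemma rp_solve x C e : 0 < x -> 0 < C -> 0 < e -> Rpower x e <= C -> x <= Rpower C (/ e).
Proof.
  intros Hx HC He H. rewrite <- (rp_inv x e) at 1 by lra.
  apply rp_le_pos; [split; [apply rp_pos| auto]| left; apply Rinv_0_lt_compat; auto].
Qed.

Lemma zlow_near (X : R -> Prop) (rho : R -> R) be B2 x0 y :
  0 < be -> 0 < B2 -> (forall y, X y -> 0 < rho y) ->
  (forall x y, X x -> X y -> (Rpower (rho y) (- be) - Rpower (rho x) (- be)) ^ 2 <= Rabs (y - x) * B2) ->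
  X x0 -> X y -> Rabs (y - x0) <= Rpower (rho x0) (- (2 * be)) / B2 ->
  Rpower 2 (- / be) * rho x0 <= rho y.
Proof.
  intros Hbe HB2 Hpos HZ Hx0 Hy Hd.
  set (z0 := Rpower (rho x0) (- be)). set (zy := Rpower (rho y) (- be)).
  assert (Hz0 : 0 < z0) by apply rp_pos. assert (Hzy : 0 < zy) by apply rp_pos.
  assert (H1 : (zy - z0) ^ 2 <= z0 ^ 2).
  { eapply Rle_trans; [apply HZ; auto|].
    unfold z0. rewrite <- rp_sq. replace (2 * - be) with (- (2 * be)) by ring.
    apply Rmult_le_reg_r with (/ B2); [apply Rinv_0_lt_compat; auto|].
    rewrite Rmult_assoc, Rinv_r, Rmult_1_r by lra. exact Hd. }
  assert (H2 : zy <= 2 * z0) by nra.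
  assert (Hr0 := Hpos x0 Hx0). assert (Hry := Hpos y Hy).
  assert (E1 : rho y = Rpower zy (- / be)).
  { unfold zy. rewrite rp_pp. replace (- be * - / be) with 1 by (field; lra). rewrite Rpower_1; auto. }
  assert (E2 : rho x0 = Rpower z0 (- / be)).
  { unfold z0. rewrite rp_pp. replace (- be * - / be) with 1 by (field; lra). rewrite Rpower_1; auto. }
  rewrite E1, E2. rewrite <- rp_mul by lra.
  apply rp_le_neg; [lra|]. assert (0 < / be) by (apply Rinv_0_lt_compat; auto). lra.
Qed.

Lemma zhigh_near (X : R -> Prop) (rho : R -> R) be B2 x0 y :
  0 < be -> 0 < B2 -> (forall y, X y -> 0 < rho y) ->
  (forall x y, X x -> X y -> (Rpower (rho y) (- be) - Rpower (rho x) (- be)) ^ 2 <= Rabs (y - x) * B2) ->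
  X x0 -> X y -> Rabs (y - x0) <= Rpower (rho x0) (- (2 * be)) / (4 * B2) ->
  rho y <= Rpower 2 (/ be) * rho x0.
Proof.
  intros Hbe HB2 Hpos HZ Hx0 Hy Hd.
  set (z0 := Rpower (rho x0) (- be)). set (zy := Rpower (rho y) (- be)).
  assert (Hz0 : 0 < z0) by apply rp_pos. assert (Hzy : 0 < zy) by apply rp_pos.
  assert (H1 : (zy - z0) ^ 2 <= (z0 / 2) ^ 2).
  { eapply Rle_trans; [apply HZ; auto|].
    replace ((z0 / 2) ^ 2) with (z0 ^ 2 / 4) by field.
    unfold z0. rewrite <- rp_sq. replace (2 * - be) with (- (2 * be)) by ring.
    apply Rmult_le_reg_r with (/ B2); [apply Rinv_0_lt_compat; auto|].
    rewrite Rmult_assoc, Rinv_r, Rmult_1_r by lra.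
    replace (Rpower (rho x0) (- (2 * be)) / 4 * / B2) with (Rpower (rho x0) (- (2 * be)) / (4 * B2)) by (field; lra).
    exact Hd. }
  assert (H2 : z0 / 2 <= zy) by nra.
  assert (Hr0 := Hpos x0 Hx0). assert (Hry := Hpos y Hy).
  assert (E1 : rho y = Rpower zy (- / be)).
  { unfold zy. rewrite rp_pp. replace (- be * - / be) with 1 by (field; lra). rewrite Rpower_1; auto. }
  assert (E2 : rho x0 = Rpower z0 (- / be)).
  { unfold z0. rewrite rp_pp. replace (- be * - / be) with 1 by (field; lra). rewrite Rpower_1; auto. }
  rewrite E1, E2.
  replace (Rpower 2 (/ be)) with (Rpower (/ 2) (- / be)).
  2: { rewrite Rpower_Ropp. unfold Rpower. rewrite ln_Rinv by lra. rewrite <- exp_Ropp. f_equal. ring. }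
  rewrite <- rp_mul by lra.
  apply rp_le_neg; [lra|]. assert (0 < / be) by (apply Rinv_0_lt_compat; auto). lra.
Qed.

Lemma rp_2inv be : Rpower 2 (- / be) * Rpower 2 (/ be) = 1.
Proof. rewrite <- Rpower_plus. replace (- / be + / be) with 0 by ring. apply Rpower_O; lra. Qed.

Lemma upper_a (rho Gfun : R -> R) be g B1 B2 rstar x0 :
  0 < be -> 1 < g -> 0 < g - 2 * be -> 0 < B1 -> 0 < B2 -> 0 < rstar ->
  (forall y, 0 < rho y) ->
  (forall x y, (Rpower (rho y) (- be) - Rpower (rho x) (- be)) ^ 2 <= Rabs (y - x) * B2) ->
  (forall r, rstar <= r -> Rpower r g / (2 * (g - 1)) <= Gfun r) ->
  (forall c d m, c <= d -> (forall y, c < y < d -> m <= Gfun (rho y)) -> m * (d - c) <= B1) ->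
  rho x0 <= Rmax (rstar * Rpower 2 (/ be)) (Rpower (2 * (g - 1) * B1 * B2 * Rpower 2 (g / be)) (/ (g - 2 * be))).
Proof.
  intros Hbe Hg Hgb HB1 HB2 Hrs Hpos HZ HGf HG.
  set (K := rho x0). assert (HK : 0 < K) by apply Hpos.
  destruct (Rle_dec K (rstar * Rpower 2 (/ be))) as [Hle|Hgt].
  { eapply Rle_trans; [exact Hle| apply Rmax_l]. }
  apply Rnot_le_lt in Hgt.
  eapply Rle_trans; [|apply Rmax_r].
  set (del := Rpower K (- (2 * be)) / B2).
  assert (Hdel : 0 < del) by (unfold del; apply Rdiv_lt_0_compat; [apply rp_pos| lra]).
  set (c2 := Rpower 2 (- / be)). assert (Hc2 : 0 < c2) by apply rp_pos.
  assert (Hnear : forall y, x0 < y < x0 + del -> c2 * K <= rho y).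
  { intros y Hy. apply (zlow_near (fun _ => True) rho be B2 x0 y); auto.
    rewrite Rabs_right by lra. unfold del in *. fold K. lra. }
  assert (Hstar : rstar <= c2 * K).
  { assert (H2 := rp_2inv be). fold c2 in H2.
    apply Rmult_lt_compat_l with (r := c2) in Hgt; auto.
    replace (c2 * (rstar * Rpower 2 (/ be))) with rstar in Hgt by (transitivity (rstar * (c2 * Rpower 2 (/ be))); [rewrite H2; ring| ring]). lra. }
  assert (HB := HG x0 (x0 + del) (Rpower (c2 * K) g / (2 * (g - 1))) ltac:(lra)).
  assert (Hm : Rpower (c2 * K) g / (2 * (g - 1)) * (x0 + del - x0) <= B1).
  { apply HB. intros y Hy. eapply Rle_trans; [|apply HGf; eapply Rle_trans; [exact Hstar| apply Hnear; auto]].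
    unfold Rdiv. apply Rmult_le_compat_r; [left; apply Rinv_0_lt_compat; lra|].
    apply rp_le_pos; [split; [nra| apply Hnear; auto]| lra]. }
  replace (x0 + del - x0) with del in Hm by ring. unfold del in Hm.
  rewrite rp_mul in Hm by lra.
  assert (Hc2g : Rpower c2 g * Rpower 2 (g / be) = 1).
  { unfold c2. rewrite rp_pp, <- Rpower_plus. replace (- / be * g + g / be) with 0 by (field; lra). apply Rpower_O; lra. }
  assert (HKe : Rpower K g * Rpower K (- (2 * be)) = Rpower K (g - 2 * be)).
  { rewrite <- Rpower_plus. f_equal; ring. }
  apply rp_solve; [exact HK| repeat apply Rmult_lt_0_compat; try lra; apply rp_pos | lra |].
  - assert (HCg : 0 < Rpower c2 g) by apply rp_pos.
    assert (H2g : 0 < Rpower 2 (g / be)) by apply rp_pos.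
    rewrite <- HKe.
    replace (Rpower c2 g * Rpower K g / (2 * (g - 1)) * (Rpower K (- (2 * be)) / B2))
      with (Rpower c2 g * (Rpower K g * Rpower K (- (2 * be))) / (2 * (g - 1) * B2)) in Hm by (field; lra).
    apply Rmult_le_compat_r with (r := 2 * (g - 1) * B2 * Rpower 2 (g / be)) in Hm; [|left; repeat apply Rmult_lt_0_compat; lra].
    replace (Rpower c2 g * (Rpower K g * Rpower K (- (2 * be))) / (2 * (g - 1) * B2) * (2 * (g - 1) * B2 * Rpower 2 (g / be)))
      with ((Rpower c2 g * Rpower 2 (g / be)) * (Rpower K g * Rpower K (- (2 * be)))) in Hm by (field; lra).
    rewrite Hc2g in Hm. lra.
Qed.

Lemma lower_a (rho Gfun : R -> R) be B1 B2 rlow m0 x0 :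
  0 < be -> 0 < B1 -> 0 < B2 -> 0 < rlow -> 0 < m0 ->
  (forall y, 0 < rho y) ->
  (forall x y, (Rpower (rho y) (- be) - Rpower (rho x) (- be)) ^ 2 <= Rabs (y - x) * B2) ->
  (forall r, 0 < r <= rlow -> m0 <= Gfun r) ->
  (forall c d m, c <= d -> (forall y, c < y < d -> m <= Gfun (rho y)) -> m * (d - c) <= B1) ->
  Rmin (Rpower 2 (- / be) * rlow) (Rpower (4 * B1 * B2 / m0) (- / (2 * be))) <= rho x0.
Proof.
  intros Hbe HB1 HB2 Hrl Hm0 Hpos HZ HGf HG.
  set (k := rho x0). assert (Hk : 0 < k) by apply Hpos.
  destruct (Rle_dec (Rpower 2 (- / be) * rlow) k) as [Hle|Hlt].
  { eapply Rle_trans; [apply Rmin_l| exact Hle]. }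
  apply Rnot_le_lt in Hlt.
  eapply Rle_trans; [apply Rmin_r|].
  set (del := Rpower k (- (2 * be)) / (4 * B2)).
  assert (Hdel : 0 < del) by (unfold del; apply Rdiv_lt_0_compat; [apply rp_pos| lra]).
  assert (Hnear : forall y, x0 < y < x0 + del -> rho y <= rlow).
  { intros y Hy. eapply Rle_trans.
    - apply (zhigh_near (fun _ => True) rho be B2 x0 y); auto.
      rewrite Rabs_right by lra. unfold del in *. fold k. lra.
    - assert (H2 := rp_2inv be). assert (0 < Rpower 2 (/ be)) by apply rp_pos.
      apply Rmult_lt_compat_l with (r := Rpower 2 (/ be)) in Hlt; auto.
      replace (Rpower 2 (/ be) * (Rpower 2 (- / be) * rlow)) with rlow in Hlt by (transitivity (rlow * (Rpower 2 (- / be) * Rpower 2 (/ be))); [rewrite H2; ring| ring]).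
      fold k. lra. }
  assert (Hm : m0 * (x0 + del - x0) <= B1).
  { apply HG; [lra|]. intros y Hy. apply HGf. split; [apply Hpos| apply Hnear; auto]. }
  replace (x0 + del - x0) with del in Hm by ring. unfold del in Hm.
  assert (Hke : Rpower k (- (2 * be)) <= 4 * B1 * B2 / m0).
  { apply Rmult_le_reg_l with (m0 / (4 * B2)); [apply Rdiv_lt_0_compat; lra|].
    replace (m0 / (4 * B2) * (4 * B1 * B2 / m0)) with B1 by (field; lra).
    replace (m0 / (4 * B2) * Rpower k (- (2 * be))) with (m0 * (Rpower k (- (2 * be)) / (4 * B2))) by (field; lra).
    exact Hm. }
  replace k with (Rpower (Rpower k (- (2 * be))) (- / (2 * be))).
  2: { rewrite rp_pp. replace (- (2 * be) * - / (2 * be)) with 1 by (field; lra). apply Rpower_1; auto. }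
  apply rp_le_neg; [split; [apply rp_pos| exact Hke]|].
  assert (0 < / (2 * be)) by (apply Rinv_0_lt_compat; lra). lra.
Qed.

Lemma upper_b (rho : R -> R) be g B1 B2 M m0 x0 :
  0 < be -> 1 < g -> 0 < g - 2 * be -> 0 < B1 -> 0 < B2 -> 0 < M -> 0 < m0 ->
  (forall y, -M <= y <= M -> 0 < rho y) ->
  (forall x y, -M <= x <= M -> -M <= y <= M ->
     (Rpower (rho y) (- be) - Rpower (rho x) (- be)) ^ 2 <= Rabs (y - x) * B2) ->
  (forall c d m, -M <= c -> c <= d -> d <= M ->
     (forall y, c < y < d -> m <= Rpower (rho y) g / (g - 1)) -> m * (d - c) <= B1) ->
  (forall m, (forall y, -M < y < M -> m * rho y <= Rpower (rho y) g / (g - 1)) -> m * m0 <= B1) ->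
  -M <= x0 <= M ->
  rho x0 <= Rmax (Rpower 2 (/ be) * Rpower ((g - 1) * B1 / m0) (/ (g - 1)))
                 (Rpower (2 * (g - 1) * B1 * B2 * Rpower 2 (g / be)) (/ (g - 2 * be))).
Proof.
  intros Hbe Hg Hgb HB1 HB2 HM Hm0 Hpos HZ HG HGM Hx0.
  set (K := rho x0). assert (HK : 0 < K) by (apply Hpos; auto).
  set (del := Rpower K (- (2 * be)) / B2).
  assert (Hdel : 0 < del) by (unfold del; apply Rdiv_lt_0_compat; [apply rp_pos| lra]).
  set (c2 := Rpower 2 (- / be)). assert (Hc2 : 0 < c2) by apply rp_pos.
  assert (Hnear : forall y, -M <= y <= M -> Rabs (y - x0) <= del -> c2 * K <= rho y).
  { intros y Hy Hyd. apply (zlow_near (fun y => -M <= y <= M) rho be B2 x0 y); auto. }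
  assert (HcK : 0 < c2 * K) by nra.
  destruct (Rle_dec (2 * M) del) as [Hc1|Hc1].
  -
    eapply Rle_trans; [|apply Rmax_l].
    assert (HB := HGM (Rpower (c2 * K) (g - 1) / (g - 1))).
    assert (Hm : Rpower (c2 * K) (g - 1) / (g - 1) * m0 <= B1).
    { apply HB. intros y Hy.
      assert (Hry : c2 * K <= rho y) by (apply Hnear; [lra| unfold Rabs; destruct Rcase_abs; lra]).
      assert (Hr : 0 < rho y) by (apply Hpos; lra).
      assert (Hp : Rpower (c2 * K) (g - 1) <= Rpower (rho y) (g - 1)) by (apply rp_le_pos; lra).
      assert (0 < / (g - 1)) by (apply Rinv_0_lt_compat; lra).
      assert (0 <= (Rpower (rho y) (g - 1) - Rpower (c2 * K) (g - 1)) * rho y * / (g - 1))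
        by (repeat apply Rmult_le_pos; lra).
      replace (Rpower (rho y) g / (g - 1)) with
        (Rpower (c2 * K) (g - 1) / (g - 1) * rho y + (Rpower (rho y) (g - 1) - Rpower (c2 * K) (g - 1)) * rho y * / (g - 1)).
      { lra. }
      rewrite (rp_m1 (rho y) g) by auto. field. split; lra. }
    assert (H1 : Rpower (c2 * K) (g - 1) <= (g - 1) * B1 / m0).
    { apply Rmult_le_reg_r with (m0 / (g - 1)); [apply Rdiv_lt_0_compat; lra|].
      replace ((g - 1) * B1 / m0 * (m0 / (g - 1))) with B1 by (field; lra).
      replace (Rpower (c2 * K) (g - 1) * (m0 / (g - 1))) with (Rpower (c2 * K) (g - 1) / (g - 1) * m0) by (field; lra).
      exact Hm. }
    assert (HC : 0 < (g - 1) * B1 / m0) by (apply Rdiv_lt_0_compat; [apply Rmult_lt_0_compat|]; lra).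
    apply (rp_solve (c2 * K) ((g - 1) * B1 / m0) (g - 1) HcK HC ltac:(lra)) in H1.
    assert (H2 := rp_2inv be). fold c2 in H2.
    replace K with (Rpower 2 (/ be) * (c2 * K)) by (transitivity (K * (c2 * Rpower 2 (/ be))); [ring| rewrite H2; ring]).
    apply Rmult_le_compat_l; [left; apply rp_pos| exact H1].
  - apply Rnot_le_lt in Hc1. eapply Rle_trans; [|apply Rmax_r].
    assert (Hint : exists c, -M <= c /\ c + del / 2 <= M /\ forall y, c <= y <= c + del / 2 -> Rabs (y - x0) <= del).
    { destruct (Rle_dec (x0 + del / 2) M).
      - exists x0. split; [lra| split; [lra|]]. intros y Hy. rewrite Rabs_right by lra. lra.
      - exists (x0 - del / 2). split; [lra| split; [lra|]]. intros y Hy. unfold Rabs; destruct Rcase_abs; lra. }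
    destruct Hint as [c [Hc [Hcd Hcy]]].
    assert (HB := HG c (c + del / 2) (Rpower (c2 * K) g / (g - 1)) Hc ltac:(lra) Hcd).
    assert (Hm : Rpower (c2 * K) g / (g - 1) * (c + del / 2 - c) <= B1).
    { apply HB. intros y Hy.
      assert (Hry : c2 * K <= rho y) by (apply Hnear; [lra| apply Hcy; lra]).
      unfold Rdiv. apply Rmult_le_compat_r; [left; apply Rinv_0_lt_compat; lra|].
      apply rp_le_pos; lra. }
    replace (c + del / 2 - c) with (del / 2) in Hm by ring. unfold del in Hm.
    rewrite rp_mul in Hm by lra.
    assert (Hc2g : Rpower c2 g * Rpower 2 (g / be) = 1).
    { unfold c2. rewrite rp_pp, <- Rpower_plus. replace (- / be * g + g / be) with 0 by (field; lra). apply Rpower_O; lra. }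
    assert (HKe : Rpower K g * Rpower K (- (2 * be)) = Rpower K (g - 2 * be)).
    { rewrite <- Rpower_plus. f_equal; ring. }
    apply rp_solve; [exact HK| repeat apply Rmult_lt_0_compat; try lra; apply rp_pos | lra |].
    assert (HCg : 0 < Rpower c2 g) by apply rp_pos.
    assert (H2g : 0 < Rpower 2 (g / be)) by apply rp_pos.
    rewrite <- HKe.
    replace (Rpower c2 g * Rpower K g / (g - 1) * (Rpower K (- (2 * be)) / B2 / 2))
      with (Rpower c2 g * (Rpower K g * Rpower K (- (2 * be))) / (2 * (g - 1) * B2)) in Hm by (field; lra).
    apply Rmult_le_compat_r with (r := 2 * (g - 1) * B2 * Rpower 2 (g / be)) in Hm; [|left; repeat apply Rmult_lt_0_compat; lra].
    replace (Rpower c2 g * (Rpower K g * Rpower K (- (2 * be))) / (2 * (g - 1) * B2) * (2 * (g - 1) * B2 * Rpower 2 (g / be)))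
      with ((Rpower c2 g * Rpower 2 (g / be)) * (Rpower K g * Rpower K (- (2 * be)))) in Hm by (field; lra).
    rewrite Hc2g in Hm. lra.
Qed.

Lemma lower_b (rho : R -> R) be B2 M m0 x0 ys :
  0 < be -> 0 < B2 -> 0 < M -> 0 < m0 ->
  (forall y, -M <= y <= M -> 0 < rho y) ->
  (forall x y, -M <= x <= M -> -M <= y <= M ->
     (Rpower (rho y) (- be) - Rpower (rho x) (- be)) ^ 2 <= Rabs (y - x) * B2) ->
  -M <= ys <= M -> m0 / (2 * M) <= rho ys ->
  -M <= x0 <= M ->
  Rpower (Rpower (m0 / (2 * M)) (- be) + sqrt (2 * M * B2)) (- / be) <= rho x0.
Proof.
  intros Hbe HB2 HM Hm0 Hpos HZ Hys Hrys Hx0.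
  set (z0 := Rpower (rho x0) (- be)). set (zs := Rpower (rho ys) (- be)).
  assert (H1 := HZ ys x0 Hys Hx0). fold z0 zs in H1.
  assert (Habs : Rabs (x0 - ys) <= 2 * M) by (unfold Rabs; destruct Rcase_abs; lra).
  assert (H2 : (z0 - zs) ^ 2 <= 2 * M * B2).
  { eapply Rle_trans; [exact H1|]. apply Rmult_le_compat_r; lra. }
  assert (H3 : z0 - zs <= sqrt (2 * M * B2)).
  { apply Rsqr_incr_0_var; [| apply sqrt_pos]. rewrite Rsqr_sqrt by nra.
    unfold Rsqr. simpl in H2. lra. }
  assert (H4 : zs <= Rpower (m0 / (2 * M)) (- be)).
  { unfold zs. apply rp_le_neg; [split; [apply Rdiv_lt_0_compat; lra| exact Hrys]| lra]. }
  assert (Hz0 : 0 < z0) by apply rp_pos.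
  assert (Hr0 : 0 < rho x0) by auto.
  replace (rho x0) with (Rpower z0 (- / be)).
  2: { unfold z0. rewrite rp_pp. replace (- be * - / be) with 1 by (field; lra). apply Rpower_1; auto. }
  apply rp_le_neg; [lra|]. assert (0 < / be) by (apply Rinv_0_lt_compat; auto). lra.
Qed.

Lemma ccont_sub a b x y f : a <= x -> x <= y -> y <= b -> ccont a b f -> ccont x y f.
Proof.
  intros H1 H2 H3 Hc s.
  apply continuity_pt_ext with (fun s => (fun z => f (clamp a b z)) (clamp x y s)).
  { intros z. cbv beta. f_equal. apply clamp_id. assert (Hc' := clamp_in x y z H2). lra. }
  apply (continuity_pt_comp (clamp x y) (fun z => f (clamp a b z))).
  - intros eps Heps. exists eps. split; [lra|]. intros w [_ Hw]. simpl in *. unfold Rdist in *.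
    eapply Rle_lt_trans; [apply clamp_lip; lra| exact Hw].
  - apply Hc.
Qed.

Definition zx al r rx := (al - / 2) * Rpower r (al - / 2 - 1) * rx.

Lemma z_estimate (D : R -> R -> Prop) X T g al a b r rx rt rxx rxt u ux ut uxx t x y :
  (forall x t, D x t <-> X x /\ 0 <= t <= T) -> a < b -> 0 < T ->
  (forall y, a <= y <= b -> X y) ->
  Good X T g al r rx rt rxx rxt u ux ut uxx ->
  cont_on D r -> cont_on D rx -> 0 <= t <= T -> a <= x -> x <= y -> y <= b ->
  (Rpower (r y t) (al - / 2) - Rpower (r x t) (al - / 2)) ^ 2
    <= (y - x) * RInt (fun s => zx al (r s t) (rx s t) ^ 2) x y.
Proof.
  intros HD Hab HT HX HG Cr Crx Ht Hax Hxy Hyb.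
  assert (Pr : forall x t, 0 < r (clamp a b x) (clamp 0 T t)).
  { intros. apply (g_pos _ _ _ _ _ _ _ _ _ _ _ _ _ HG); [apply HX|]; apply clamp_in; lra. }
  prep_rect HD Hab HX HT.
  assert (Cz : ccont a b (fun s => Rpower (r s t) (al - / 2))).
  { apply (c2d_ccont (fun s t => Rpower (r s t) (al - / 2)) a b T t); [lra| lra|]. intros; cbv beta; ctac. }
  assert (Czx : ccont a b (fun s => zx al (r s t) (rx s t))).
  { apply (c2d_ccont (fun s t => zx al (r s t) (rx s t)) a b T t); [lra| lra|]. intros; cbv beta; unfold zx; ctac. }
  assert (Czx2 : ccont a b (fun s => zx al (r s t) (rx s t) ^ 2)).
  { apply (c2d_ccont (fun s t => zx al (r s t) (rx s t) ^ 2) a b T t); [lra| lra|]. intros; cbv beta; unfold zx; ctac. }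
  rewrite <- (ftc x y (fun s => Rpower (r s t) (al - / 2)) (fun s => zx al (r s t) (rx s t))); auto.
  - apply cauchy_schwarz; auto.
    + apply (ccont_exRInt_sub a b); auto; lra.
    + apply (ccont_exRInt_sub a b); auto; lra.
  - apply (ccont_sub a b); auto.
  - apply (ccont_sub a b); auto.
  - intros s Hs. assert (Hxi := Xint_ab X a b s HX ltac:(lra)).
    destruct (g_dx _ _ _ _ _ _ _ _ _ _ _ _ _ HG s t Hxi Ht) as [D1 _].
    assert (Hr : 0 < r s t) by (apply (g_pos _ _ _ _ _ _ _ _ _ _ _ _ _ HG); [apply HX; lra| lra]).
    unfold zx. eapply dpl_eq; [dtac|]. ring.
Qed.

Lemma zx_pw al g A B r rx u : 0 < al < / 2 -> 0 < r -> 0 <= Gf g A B r ->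
  zx al r rx ^ 2 <= Een g A B r u + Ebd g al A B r rx u.
Proof.
  intros Hal Hr HG. unfold zx, Een, Ebd, wv.
  assert (E : Rpower r (al - / 2 - 1) ^ 2 = r * Rpower r (al - 2) ^ 2).
  { rewrite <- !rp_sq. replace (2 * (al - / 2 - 1)) with (1 + 2 * (al - 2)) by field.
    rewrite Rpower_plus, Rpower_1 by auto. reflexivity. }
  set (w := Rpower r (al - 2) * rx).
  replace ((al - / 2) * Rpower r (al - / 2 - 1) * rx) with ((al - / 2) * Rpower r (al - / 2 - 1) * rx) by reflexivity.
  assert (Hz : ((al - / 2) * Rpower r (al - / 2 - 1) * rx) ^ 2 = (al - / 2) ^ 2 * (r * w ^ 2)).
  { unfold w. replace (((al - / 2) * Rpower r (al - / 2 - 1) * rx) ^ 2) with ((al - / 2) ^ 2 * Rpower r (al - / 2 - 1) ^ 2 * rx ^ 2) by ring.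
    rewrite E. ring. }
  rewrite Hz.
  assert (Hw : w ^ 2 <= 2 * (u + w) ^ 2 + 2 * u ^ 2) by (assert (0 <= (2 * u + w) ^ 2) by apply pow2_ge_0; nra).
  assert (Hc : (al - / 2) ^ 2 <= / 4) by nra.
  assert (Hc0 : 0 <= (al - / 2) ^ 2) by nra.
  assert (0 <= r * w ^ 2) by nra.
  assert ((al - / 2) ^ 2 * (r * w ^ 2) <= / 4 * (r * w ^ 2)) by nra.
  assert (r * w ^ 2 <= r * (2 * (u + w) ^ 2 + 2 * u ^ 2)) by (apply Rmult_le_compat_l; lra).
  nra.
Qed.

Lemma rp_one e : Rpower 1 e = 1.
Proof. unfold Rpower. rewrite ln_1, Rmult_0_r. apply exp_0. Qed.

Lemma bern g s : 1 <= g -> 0 < s -> 1 + g * (s - 1) <= Rpower s g.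
Proof.
  intros Hg Hs.
  set (phi := fun y => Rpower y g - g * y).
  assert (Hd : forall c, 0 < c -> derivable_pt_lim phi c (g * Rpower c (g - 1) - g)).
  { intros c Hc. unfold phi. eapply dpl_eq.
    - apply (dpl_minus (fun y => Rpower y g) (fun y => g * y)).
      + apply derivable_pt_lim_power; auto.
      + apply (dpl_mult (fun _ => g) (fun y => y)); [apply dpl_const| apply derivable_pt_lim_id].
    - ring. }
  assert (phi 1 = 1 - g) by (unfold phi; rewrite rp_one; ring).
  destruct (Rtotal_order s 1) as [Hlt|[Heq|Hgt]].
  - destruct (MVT_cor2 phi (fun c => g * Rpower c (g - 1) - g) s 1 Hlt) as [c [Hc1 Hc2]].
    { intros c Hc; apply Hd; lra. }
    assert (Rpower c (g - 1) <= 1).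
    { assert (H1 := rp_le_pos c 1 (g - 1) ltac:(lra) ltac:(lra)). rewrite rp_one in H1. exact H1. }
    assert (E1 : g * Rpower c (g - 1) - g <= 0) by nra.
    assert (E2 : (g * Rpower c (g - 1) - g) * (1 - s) <= 0).
    { replace ((g * Rpower c (g - 1) - g) * (1 - s)) with (- ((- (g * Rpower c (g - 1) - g)) * (1 - s))) by ring.
      assert (0 <= (- (g * Rpower c (g - 1) - g)) * (1 - s)) by (apply Rmult_le_pos; lra). lra. }
    unfold phi in *. lra.
  - subst. rewrite rp_one; lra.
  - destruct (MVT_cor2 phi (fun c => g * Rpower c (g - 1) - g) 1 s Hgt) as [c [Hc1 Hc2]].
    { intros c Hc; apply Hd; lra. }
    assert (1 <= Rpower c (g - 1)).
    { assert (H1 := rp_le_pos 1 c (g - 1) ltac:(lra) ltac:(lra)). rewrite rp_one in H1. exact H1. }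
    assert (E1 : 0 <= g * Rpower c (g - 1) - g) by nra.
    assert (E2 : 0 <= (g * Rpower c (g - 1) - g) * (s - 1)) by (apply Rmult_le_pos; lra).
    unfold phi in *. lra.
Qed.

Definition Aa g rb := Rpower rb g - g * Rpower rb (g - 1) * rb.
Definition Ba g rb := g * Rpower rb (g - 1).

Lemma rhoPsi_Gf g rb r : 1 < g -> rhoPsi g rb r = Gf g (Aa g rb) (Ba g rb) r.
Proof. intros. unfold rhoPsi, Gf, Aa, Ba. field. lra. Qed.

Lemma Aa_eq g rb : 0 < rb -> Aa g rb = (1 - g) * Rpower rb g.
Proof. intros. unfold Aa. rewrite rp_m1 by auto. field. lra. Qed.

Lemma Gf_nonneg_a g rb r : 1 < g -> 0 < rb -> 0 < r -> 0 <= Gf g (Aa g rb) (Ba g rb) r.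
Proof.
  intros Hg Hrb Hr.
  assert (Hb := bern g (r / rb) ltac:(lra) ltac:(apply Rdiv_lt_0_compat; lra)).
  assert (E : Rpower r g = Rpower rb g * Rpower (r / rb) g).
  { rewrite <- rp_mul by (try apply Rdiv_lt_0_compat; lra). f_equal. field. lra. }
  unfold Gf, Aa, Ba. rewrite rp_m1 by auto.
  assert (Hp : 0 < Rpower rb g) by apply rp_pos.
  apply Rmult_le_pos; [|left; apply Rinv_0_lt_compat; lra].
  rewrite E.
  assert (Rpower rb g * (1 + g * (r / rb - 1)) <= Rpower rb g * Rpower (r / rb) g) by (apply Rmult_le_compat_l; lra).
  replace (Rpower rb g * (1 + g * (r / rb - 1))) with (Rpower rb g + g * (Rpower rb g / rb) * r - g * (Rpower rb g / rb) * rb - 0) in H by (field; lra).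
  lra.
Qed.

Lemma Gf_big_a g rb r : 1 < g -> 0 < rb -> Rpower (2 * Ba g rb) (/ (g - 1)) <= r ->
  Rpower r g / (2 * (g - 1)) <= Gf g (Aa g rb) (Ba g rb) r.
Proof.
  intros Hg Hrb Hr.
  assert (HB : 0 < Ba g rb) by (unfold Ba; apply Rmult_lt_0_compat; [lra| apply rp_pos]).
  assert (Hr0 : 0 < r) by (eapply Rlt_le_trans; [apply rp_pos| exact Hr]).
  assert (H1 : 2 * Ba g rb <= Rpower r (g - 1)).
  { replace (2 * Ba g rb) with (Rpower (Rpower (2 * Ba g rb) (/ (g - 1))) (g - 1)).
    - apply rp_le_pos; [split; [apply rp_pos| auto]| lra].
    - rewrite rp_pp. replace (/ (g - 1) * (g - 1)) with 1 by (field; lra). apply Rpower_1; lra. }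
  rewrite rp_m1 in H1 by auto.
  assert (H2 : 2 * Ba g rb * r <= Rpower r g).
  { apply Rmult_le_compat_r with (r := r) in H1; [|lra]. replace (Rpower r g / r * r) with (Rpower r g) in H1 by (field; lra). lra. }
  rewrite Aa_eq by auto.
  assert (0 < Rpower rb g) by apply rp_pos.
  unfold Gf. apply Rmult_le_reg_l with (2 * (g - 1)); [lra|].
  replace (2 * (g - 1) * (Rpower r g / (2 * (g - 1)))) with (Rpower r g) by (field; lra).
  replace (2 * (g - 1) * ((Rpower r g - (1 - g) * Rpower rb g - Ba g rb * r) / (g - 1)))
    with (2 * (Rpower r g - (1 - g) * Rpower rb g - Ba g rb * r)) by (field; lra).
  nra.
Qed.

Lemma Gf_small_a g rb r : 1 < g -> 0 < rb -> 0 < r <= (g - 1) / (2 * g) * rb ->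
  Rpower rb g / 2 <= Gf g (Aa g rb) (Ba g rb) r.
Proof.
  intros Hg Hrb Hr.
  rewrite Aa_eq by auto. unfold Gf, Ba. rewrite rp_m1 by auto.
  assert (0 < Rpower rb g) by apply rp_pos. assert (0 < Rpower r g) by apply rp_pos.
  apply Rmult_le_reg_l with (g - 1); [lra|].
  replace ((g - 1) * ((Rpower r g - (1 - g) * Rpower rb g - g * (Rpower rb g / rb) * r) / (g - 1)))
    with (Rpower r g - (1 - g) * Rpower rb g - g * (Rpower rb g / rb) * r) by (field; lra).
  assert (g * (Rpower rb g / rb) * r <= g * (Rpower rb g / rb) * ((g - 1) / (2 * g) * rb)).
  { apply Rmult_le_compat_l; [|lra]. apply Rmult_le_pos; [lra|]. apply Rlt_le, Rdiv_lt_0_compat; lra. }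
  replace (g * (Rpower rb g / rb) * ((g - 1) / (2 * g) * rb)) with ((g - 1) / 2 * Rpower rb g) in H1 by (field; lra).
  nra.
Qed.

Definition bnd T (f : R -> R -> R) := exists K R0, forall x t, 0 <= t <= T -> R0 < Rabs x -> Rabs (f x t) <= K.

Lemma dec_bnd T f : decay0 T f -> bnd T f.
Proof. intros H. destruct (H 1 ltac:(lra)) as [R0 HR]. exists 1, R0. intros. left; auto. Qed.

Lemma bnd_const T c : bnd T (fun _ _ => c).
Proof. exists (Rabs c), 0. intros; lra. Qed.

Lemma bnd_join T f g (P : R -> R -> R -> R -> R) :
  (forall K1 K2, exists K, forall a b, Rabs a <= K1 -> Rabs b <= K2 -> Rabs (P a b 0 0) <= K) ->
  bnd T f -> bnd T g -> bnd T (fun x t => P (f x t) (g x t) 0 0).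
Proof.
  intros HP [K1 [R1 H1]] [K2 [R2 H2]]. destruct (HP K1 K2) as [K HK].
  exists K, (Rmax R1 R2). intros x t Ht Hx. apply HK.
  - apply H1; auto. eapply Rle_lt_trans; [apply Rmax_l| exact Hx].
  - apply H2; auto. eapply Rle_lt_trans; [apply Rmax_r| exact Hx].
Qed.

Lemma bnd_plus T f g : bnd T f -> bnd T g -> bnd T (fun x t => f x t + g x t).
Proof.
  intros. apply (bnd_join T f g (fun a b _ _ => a + b)); auto.
  intros K1 K2. exists (K1 + K2). intros a b Ha Hb. eapply Rle_trans; [apply Rabs_triang| lra].
Qed.

Lemma bnd_minus T f g : bnd T f -> bnd T g -> bnd T (fun x t => f x t - g x t).
Proof.
  intros. apply (bnd_join T f g (fun a b _ _ => a - b)); auto.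
  intros K1 K2. exists (K1 + K2). intros a b Ha Hb. eapply Rle_trans; [apply Rabs_triang| rewrite Rabs_Ropp; lra].
Qed.

Lemma bnd_mult T f g : bnd T f -> bnd T g -> bnd T (fun x t => f x t * g x t).
Proof.
  intros. apply (bnd_join T f g (fun a b _ _ => a * b)); auto.
  intros K1 K2. exists (Rabs K1 * Rabs K2). intros a b Ha Hb. rewrite Rabs_mult.
  apply Rmult_le_compat; try apply Rabs_pos.
  - eapply Rle_trans; [exact Ha| apply Rle_abs].
  - eapply Rle_trans; [exact Hb| apply Rle_abs].
Qed.

Lemma bnd_divc T f c : bnd T f -> bnd T (fun x t => f x t / c).
Proof. intros. unfold Rdiv. apply (bnd_mult T f (fun _ _ => / c)); auto. apply bnd_const. Qed.

Lemma bnd_pow T f n : bnd T f -> bnd T (fun x t => f x t ^ n).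
Proof.
  intros H. induction n.
  - simpl. apply bnd_const.
  - simpl. apply (bnd_mult T f (fun x t => f x t ^ n)); auto.
Qed.

Lemma bnd_rp T r rb e : 0 < rb -> decay0 T (fun x t => r x t - rb) -> bnd T (fun x t => Rpower (r x t) e).
Proof.
  intros Hrb H. destruct (H (rb / 2) ltac:(lra)) as [R0 HR].
  exists (Rpower (rb / 2) e + Rpower (3 * rb / 2) e), R0. intros x t Ht Hx.
  specialize (HR x t Ht Hx). assert (Hr : rb / 2 < r x t < 3 * rb / 2) by (revert HR; unfold Rabs; destruct Rcase_abs; lra).
  assert (H1 : 0 < Rpower (r x t) e) by apply rp_pos.
  assert (H2 : 0 < Rpower (rb / 2) e) by apply rp_pos.
  assert (H3 : 0 < Rpower (3 * rb / 2) e) by apply rp_pos.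
  rewrite Rabs_right by lra.
  destruct (Rle_dec 0 e).
  - assert (Rpower (r x t) e <= Rpower (3 * rb / 2) e) by (apply rp_le_pos; lra). lra.
  - assert (Rpower (r x t) e <= Rpower (rb / 2) e) by (apply rp_le_neg; lra). lra.
Qed.

Lemma bnd_r T r rb : decay0 T (fun x t => r x t - rb) -> bnd T r.
Proof.
  intros H. destruct (dec_bnd T _ H) as [K [R0 HK]]. exists (K + Rabs rb), R0. intros x t Ht Hx.
  replace (r x t) with ((r x t - rb) + rb) by ring. eapply Rle_trans; [apply Rabs_triang|].
  specialize (HK x t Ht Hx). lra.
Qed.

Lemma dec_mult T f g : decay0 T f -> bnd T g -> decay0 T (fun x t => f x t * g x t).
Proof.
  intros Hf [K [R0 HK]] eps Heps.
  assert (HK1 : 0 < Rabs K + 1) by (assert (0 <= Rabs K) by apply Rabs_pos; lra).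
  destruct (Hf (eps / (2 * (Rabs K + 1)))) as [R1 HR1]; [apply Rdiv_lt_0_compat; lra|].
  exists (Rmax R0 R1). intros x t Ht Hx.
  assert (A1 := HK x t Ht ltac:(eapply Rle_lt_trans; [apply Rmax_l| exact Hx])).
  assert (A2 := HR1 x t Ht ltac:(eapply Rle_lt_trans; [apply Rmax_r| exact Hx])).
  rewrite Rabs_mult.
  assert (Rabs (g x t) <= Rabs K + 1) by (assert (K <= Rabs K) by apply Rle_abs; lra).
  apply Rle_lt_trans with (eps / (2 * (Rabs K + 1)) * (Rabs K + 1)).
  - apply Rmult_le_compat; try apply Rabs_pos; lra.
  - replace (eps / (2 * (Rabs K + 1)) * (Rabs K + 1)) with (eps / 2) by (field; lra). lra.
Qed.

Lemma dec_ext T f g : (forall x t, g x t = f x t) -> decay0 T f -> decay0 T g.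
Proof. intros E H eps Heps. destruct (H eps Heps) as [R0 HR]. exists R0. intros; rewrite E; auto. Qed.

Lemma bnd_rp' T r rb e : decay0 T (fun x t => r x t - rb) -> 0 < rb -> bnd T (fun x t => Rpower (r x t) e).
Proof. intros; eapply bnd_rp; eauto. Qed.

Ltac btac :=
  lazymatch goal with
  | |- bnd _ (fun _ _ => ?c) => apply bnd_const
  | |- bnd ?T (fun x t => @?A x t + @?B x t) => apply (bnd_plus T A B); btac
  | |- bnd ?T (fun x t => @?A x t - @?B x t) => apply (bnd_minus T A B); btac
  | |- bnd ?T (fun x t => @?A x t * @?B x t) => apply (bnd_mult T A B); btac
  | |- bnd ?T (fun x t => @?A x t / ?c) => apply (bnd_divc T A c); btac
  | |- bnd ?T (fun x t => @?A x t ^ ?n) => apply (bnd_pow T A n); btac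
  | |- bnd ?T (fun x t => Rpower (?r x t) ?e) => eapply (bnd_rp' T r); [eassumption| assumption]
  | |- bnd ?T ?f => first [eapply bnd_r; eassumption | apply dec_bnd; assumption | fail 2 "bleaf" f]
  end.

Lemma le_eps x y : (forall eps, 0 < eps -> x <= y + eps) -> x <= y.
Proof.
  intros H. destruct (Rle_dec x y); auto. exfalso.
  specialize (H ((x - y) / 2) ltac:(lra)). lra.
Qed.

Lemma hasint_le f E0 a b : has_int_R f E0 -> a <= b -> (forall x, 0 <= f x) ->
  ex_RInt f a b /\ RInt f a b <= E0.
Proof.
  intros [Hi Hl] Hab Hp.
  assert (Hex : forall a b, ex_RInt f a b).
  { intros a' b'. destruct (Hi a' b') as [pr]. apply ex_RInt_Reals_1; exact pr. }
  split; [auto|]. apply le_eps. intros eps Heps.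
  destruct (Hl eps Heps) as [Rr HR].
  set (a' := Rmin a (- Rr - 1)). set (b' := Rmax b (Rr + 1)).
  assert (H1 : a' <= a) by apply Rmin_l. assert (H2 : b <= b') by apply Rmax_l.
  assert (H3 : a' <= - Rr - 1) by apply Rmin_r. assert (H4 : Rr + 1 <= b') by apply Rmax_r.
  destruct (Hi a' b') as [pr].
  specialize (HR a' b' pr ltac:(lra) ltac:(lra)).
  rewrite <- RInt_Reals in HR.
  assert (RInt f a b <= RInt f a' b') by (apply RInt_sub_le; auto; lra).
  revert HR; unfold Rabs; destruct Rcase_abs; lra.
Qed.

Lemma HD_strip T : forall x t, Dstrip T x t <-> (fun _ : R => True) x /\ 0 <= t <= T.
Proof. intros; unfold Dstrip; tauto. Qed.

Lemma X_true a b : forall y : R, a <= y <= b -> (fun _ : R => True) y.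
Proof. intros; exact I. Qed.

Lemma Een_nonneg g A B r u : 0 < r -> 0 <= Gf g A B r -> 0 <= Een g A B r u.
Proof. intros. unfold Een. assert (0 <= r * u ^ 2 / 2) by (assert (0 <= u ^ 2) by apply pow2_ge_0; unfold Rdiv; apply Rmult_le_pos; [apply Rmult_le_pos|]; lra). lra. Qed.

Lemma Ebd_nonneg g al A B r rx u : 0 < r -> 0 <= Gf g A B r -> 0 <= Ebd g al A B r rx u.
Proof.
  intros. unfold Ebd. set (v := u + wv al r rx).
  assert (0 <= r * v ^ 2 / 2) by (assert (0 <= v ^ 2) by apply pow2_ge_0; unfold Rdiv; apply Rmult_le_pos; [apply Rmult_le_pos|]; lra). lra.
Qed.

Lemma Ebd_init g al A B r rx u q : 0 < al < / 2 -> 0 < r -> 0 <= Gf g A B r ->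
  q = zx al r rx ->
  Ebd g al A B r rx u <= (1 + / (al - / 2) ^ 2) * (r * u ^ 2 + q ^ 2 + Gf g A B r).
Proof.
  intros Hal Hr HG Hq. subst q. unfold Ebd, zx, wv.
  assert (E : Rpower r (al - / 2 - 1) ^ 2 = r * Rpower r (al - 2) ^ 2).
  { rewrite <- !rp_sq. replace (2 * (al - / 2 - 1)) with (1 + 2 * (al - 2)) by field.
    rewrite Rpower_plus, Rpower_1 by auto. reflexivity. }
  set (w := Rpower r (al - 2) * rx).
  assert (Hne : al - / 2 <> 0) by lra.
  assert (Hz : ((al - / 2) * Rpower r (al - / 2 - 1) * rx) ^ 2 = (al - / 2) ^ 2 * (r * w ^ 2)).
  { unfold w. replace (((al - / 2) * Rpower r (al - / 2 - 1) * rx) ^ 2) with ((al - / 2) ^ 2 * Rpower r (al - / 2 - 1) ^ 2 * rx ^ 2) by ring.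
    rewrite E. ring. }
  rewrite Hz.
  set (c := (al - / 2) ^ 2) in *.
  assert (Hc : 0 < c) by (unfold c; replace ((al - / 2) ^ 2) with ((/ 2 - al) ^ 2) by ring; apply pow_lt; lra).
  assert (Hw : (u + w) ^ 2 <= 2 * u ^ 2 + 2 * w ^ 2) by (assert (0 <= (u - w) ^ 2) by apply pow2_ge_0; nra).
  assert (H1 : r * (u + w) ^ 2 / 2 <= r * u ^ 2 + r * w ^ 2).
  { assert (r * (u + w) ^ 2 <= r * (2 * u ^ 2 + 2 * w ^ 2)) by (apply Rmult_le_compat_l; lra). lra. }
  assert (Hu : 0 <= r * u ^ 2) by (apply Rmult_le_pos; [lra| apply pow2_ge_0]).
  assert (Hw2 : 0 <= r * w ^ 2) by (apply Rmult_le_pos; [lra| apply pow2_ge_0]).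
  assert (Hic : 0 < / c) by (apply Rinv_0_lt_compat; auto).
  assert (E2 : r * w ^ 2 = / c * (c * (r * w ^ 2))) by (field; lra).
  assert (Hcrw : 0 <= c * (r * w ^ 2)) by (apply Rmult_le_pos; lra).
  assert (/ c * (c * (r * w ^ 2)) <= (1 + / c) * (c * (r * w ^ 2))) by (apply Rmult_le_compat_r; lra).
  assert (r * u ^ 2 <= (1 + / c) * (r * u ^ 2)) by (assert (0 <= / c * (r * u ^ 2)) by (apply Rmult_le_pos; lra); lra).
  assert (Gf g A B r <= (1 + / c) * Gf g A B r) by (assert (0 <= / c * Gf g A B r) by (apply Rmult_le_pos; lra); lra).
  lra.
Qed.

Lemma limit_arg (Et E00 I0 : R -> R) Kc E0 c d T t :
  (forall a b, a <= b -> ex_RInt Et a b) -> (forall x, 0 <= Et x) ->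
  (forall a b, a <= b -> ex_RInt E00 a b) -> (forall x, E00 x <= Kc * I0 x) -> 0 <= Kc ->
  has_int_R I0 E0 -> (forall x, 0 <= I0 x) -> 0 <= t <= T ->
  (forall eps, 0 < eps -> exists R0, forall a b, a < - R0 -> R0 < b ->
      RInt Et a b <= RInt E00 a b + eps * t) ->
  c <= d -> RInt Et c d <= Kc * Rabs E0.
Proof.
  intros HEt HEt0 HE00 HE00I HKc HI HI0 Ht Hlim Hcd.
  apply le_eps. intros e He.
  destruct (Hlim (e / (T + 1))) as [R0 HR]; [apply Rdiv_lt_0_compat; lra|].
  set (a := Rmin c (- R0 - 1) - 1). set (b := Rmax d (R0 + 1) + 1).
  assert (H1 : a < c) by (unfold a; assert (H := Rmin_l c (- R0 - 1)); lra).
  assert (H2 : a < - R0) by (unfold a; assert (H := Rmin_r c (- R0 - 1)); lra).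
  assert (H3 : d < b) by (unfold b; assert (H := Rmax_l d (R0 + 1)); lra).
  assert (H4 : R0 < b) by (unfold b; assert (H := Rmax_r d (R0 + 1)); lra).
  specialize (HR a b H2 H4).
  assert (S1 : RInt Et c d <= RInt Et a b) by (apply RInt_sub_le; try lra; [apply HEt; lra| intros; apply HEt0]).
  destruct (hasint_le I0 E0 a b HI ltac:(lra) HI0) as [HexI HleI].
  assert (S2 : RInt E00 a b <= RInt (fun x => scal Kc (I0 x)) a b).
  { apply RInt_le; [lra| apply HE00; lra| apply (@ex_RInt_scal R_NormedModule); auto|]. intros; apply HE00I. }
  rewrite (@RInt_scal R_CompleteNormedModule) in S2 by auto. unfold scal in S2; simpl in S2; unfold mult in S2; simpl in S2.
  assert (S3 : Kc * RInt I0 a b <= Kc * Rabs E0).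
  { apply Rmult_le_compat_l; auto. eapply Rle_trans; [exact HleI| apply Rle_abs]. }
  assert (S4 : e / (T + 1) * t <= e).
  { apply Rle_trans with (e / (T + 1) * (T + 1)).
    - apply Rmult_le_compat_l; [left; apply Rdiv_lt_0_compat; lra| lra].
    - right. field. lra. }
  lra.
Qed.

Lemma ex_gen (f : R -> R) : (forall a b, a < b -> ex_RInt f a b) -> forall a b, a <= b -> ex_RInt f a b.
Proof.
  intros H a b Hab. destruct (Req_dec a b) as [<-|]; [apply (@ex_RInt_point R_NormedModule)| apply H; lra].
Qed.

Lemma est_a T g al rb rho u q E0 rx rt rxx rxt ux ut uxx :
  1 < g -> 0 < al < / 2 -> 0 < rb -> 0 < T ->
  Good (fun _ => True) T g al rho rx rt rxx rxt u ux ut uxx ->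
  cont_on (Dstrip T) rho -> cont_on (Dstrip T) rx -> cont_on (Dstrip T) rt -> cont_on (Dstrip T) rxx ->
  cont_on (Dstrip T) rxt -> cont_on (Dstrip T) u -> cont_on (Dstrip T) ux -> cont_on (Dstrip T) ut ->
  cont_on (Dstrip T) uxx ->
  decay0 T (fun x t => rho x t - rb) -> decay0 T rx -> decay0 T u -> decay0 T ux ->
  (forall x t, Dstrip T x t -> pdx (Dstrip T) (fun y s => Rpower (rho y s) (al - / 2)) x t (q x t)) ->
  has_int_R (fun x => rho x 0 * u x 0 ^ 2 + q x 0 ^ 2 + rhoPsi g rb (rho x 0)) E0 ->
  forall t, 0 <= t <= T -> forall c d, c <= d ->
   RInt (fun x => Een g (Aa g rb) (Ba g rb) (rho x t) (u x t)) c d <= (1 + / (al - / 2) ^ 2) * Rabs E0 /\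
   RInt (fun x => Ebd g al (Aa g rb) (Ba g rb) (rho x t) (rx x t) (u x t)) c d <= (1 + / (al - / 2) ^ 2) * Rabs E0.
Proof.
  intros Hg Hal Hrb HT HG Cr Crx Crt Crxx Crxt Cu Cux Cut Cuxx Dr Drx Du Dux Hq HE0 t Ht c d Hcd.
  set (A := Aa g rb). set (B := Ba g rb). set (Kc := 1 + / (al - / 2) ^ 2).
  assert (Hc0 : 0 < (al - / 2) ^ 2) by (replace ((al - / 2) ^ 2) with ((/ 2 - al) ^ 2) by ring; apply pow_lt; lra).
  assert (HKc : 1 <= Kc) by (unfold Kc; assert (0 < / (al - / 2) ^ 2) by (apply Rinv_0_lt_compat; auto); lra).
  assert (Hpos : forall x t, 0 <= t <= T -> 0 < rho x t) by (intros; apply (g_pos _ _ _ _ _ _ _ _ _ _ _ _ _ HG); auto).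
  assert (HGf : forall x t, 0 <= t <= T -> 0 <= Gf g A B (rho x t)) by (intros; apply Gf_nonneg_a; auto).
  assert (Hxi : forall x, Xint (fun _ => True) x) by (intros; exists 1; split; [lra| intros; exact I]).
  assert (HT0 : 0 <= 0 <= T) by lra.
  assert (Hq0 : forall x, q x 0 = zx al (rho x 0) (rx x 0)).
  { intros x. eapply uniqueness_limite.
    - apply (pdx_dpl' (Dstrip T) (fun _ => True) T (fun y s => Rpower (rho y s) (al - / 2)) x 0);
        [apply HD_strip| apply Hxi| lra| apply Hq; unfold Dstrip; lra].
    - destruct (g_dx _ _ _ _ _ _ _ _ _ _ _ _ _ HG x 0 (Hxi x) HT0) as [D1 _].
      assert (Hr := Hpos x 0 HT0). unfold zx. eapply dpl_eq; [dtac|]. ring. }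
  set (I0 := fun x => rho x 0 * u x 0 ^ 2 + q x 0 ^ 2 + rhoPsi g rb (rho x 0)).
  assert (HI0 : forall x, 0 <= I0 x).
  { intros x. unfold I0. rewrite rhoPsi_Gf by auto. assert (H1 := HGf x 0 HT0). assert (H2 := Hpos x 0 HT0).
    assert (0 <= rho x 0 * u x 0 ^ 2) by (apply Rmult_le_pos; [lra| apply pow2_ge_0]).
    assert (0 <= q x 0 ^ 2) by apply pow2_ge_0. fold A B. lra. }
  assert (Hex : forall (F : R -> R -> R), (forall a b, a < b ->
       (forall x t, continuity_2d_pt (fun x t => rho (clamp a b x) (clamp 0 T t)) x t) ->
       (forall x t, continuity_2d_pt (fun x t => rx (clamp a b x) (clamp 0 T t)) x t) ->
       (forall x t, continuity_2d_pt (fun x t => u (clamp a b x) (clamp 0 T t)) x t) ->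
       (forall x t, continuity_2d_pt (fun x t => ux (clamp a b x) (clamp 0 T t)) x t) ->
       (forall x t, 0 < rho (clamp a b x) (clamp 0 T t)) ->
       forall x t, continuity_2d_pt (fun x t => F (clamp a b x) (clamp 0 T t)) x t) ->
     forall s, 0 <= s <= T -> forall a b, a <= b -> ex_RInt (fun x => F x s) a b).
  { intros F HF s Hs. apply ex_gen. intros a b Hab.
    apply ccont_exRInt; [lra|]. apply (c2d_ccont F a b T s); [lra| auto|].
    apply HF; auto.
    - apply (clamp_data _ _ _ _ _ _ (HD_strip T) Hab (X_true a b) HT Cr).
    - apply (clamp_data _ _ _ _ _ _ (HD_strip T) Hab (X_true a b) HT Crx).
    - apply (clamp_data _ _ _ _ _ _ (HD_strip T) Hab (X_true a b) HT Cu).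
    - apply (clamp_data _ _ _ _ _ _ (HD_strip T) Hab (X_true a b) HT Cux).
    - intros; apply Hpos. apply clamp_in; lra. }
  assert (DFen : decay0 T (fun x t => Fen g al A B (rho x t) (u x t) (ux x t))).
  { apply dec_ext with (fun x t => u x t * (rho x t * u x t ^ 2 / 2 + (Rpower (rho x t) g - A - B * rho x t) / (g - 1)
       + (Rpower (rho x t) g + A / (g - 1)) - Rpower (rho x t) al * ux x t)).
    { intros; cbv beta; unfold Fen, Gf; field. lra. }
    apply (dec_mult T u); auto. btac. }
  assert (DFbd : decay0 T (fun x t => Fbd g al A B (rho x t) (rx x t) (u x t))).
  { apply dec_ext with (fun x t => u x t * (rho x t * (u x t + Rpower (rho x t) (al - 2) * rx x t) ^ 2 / 2
       + (Rpower (rho x t) g - A - B * rho x t) / (g - 1) + (Rpower (rho x t) g + A / (g - 1)))).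
    { intros; cbv beta; unfold Fbd, wv, Gf; field; lra. }
    apply (dec_mult T u); auto. btac. }
  split.
  - apply (limit_arg (fun x => Een g A B (rho x t) (u x t)) (fun x => Een g A B (rho x 0) (u x 0)) I0 Kc E0 c d T t);
      auto; try lra.
    + apply (Hex (fun x t => Een g A B (rho x t) (u x t))); auto.
      intros; cbv beta; unfold Een, Gf; ctac.
    + intros x. apply Een_nonneg; auto.
    + apply (Hex (fun x t => Een g A B (rho x t) (u x t))); auto.
      intros; cbv beta; unfold Een, Gf; ctac.
    + intros x. unfold I0. rewrite rhoPsi_Gf by auto. fold A B.
      assert (0 <= q x 0 ^ 2) by apply pow2_ge_0.
      assert (0 <= rho x 0 * u x 0 ^ 2) by (apply Rmult_le_pos; [left; apply Hpos; lra| apply pow2_ge_0]).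
      assert (0 <= Gf g A B (rho x 0)) by auto.
      unfold Een.
      assert (rho x 0 * u x 0 ^ 2 + q x 0 ^ 2 + Gf g A B (rho x 0) <= Kc * (rho x 0 * u x 0 ^ 2 + q x 0 ^ 2 + Gf g A B (rho x 0))).
      { assert (0 <= (Kc - 1) * (rho x 0 * u x 0 ^ 2 + q x 0 ^ 2 + Gf g A B (rho x 0))) by (apply Rmult_le_pos; lra). lra. }
      lra.
    + intros eps Heps. destruct (DFen (eps / 2) ltac:(lra)) as [R0 HR0].
      exists (Rabs R0). intros a b Ha Hb.
      assert (HRa := Rle_abs R0). assert (HRb : - Rabs R0 <= R0) by (unfold Rabs; destruct Rcase_abs; lra).
      apply (energy_en (Dstrip T) (fun _ => True) T g al A B a b rho rx rt rxx rxt u ux ut uxx eps).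
      all: try solve [apply HD_strip | intros; exact I | auto | lra].
      intros s Hs. assert (H1 := HR0 a s ltac:(lra) ltac:(unfold Rabs at 1; destruct Rcase_abs; lra)).
        assert (H2 := HR0 b s ltac:(lra) ltac:(unfold Rabs at 1; destruct Rcase_abs; lra)).
        revert H1 H2. unfold Rabs; repeat destruct Rcase_abs; lra.
  - apply (limit_arg (fun x => Ebd g al A B (rho x t) (rx x t) (u x t)) (fun x => Ebd g al A B (rho x 0) (rx x 0) (u x 0)) I0 Kc E0 c d T t);
      auto; try lra.
    + apply (Hex (fun x t => Ebd g al A B (rho x t) (rx x t) (u x t))); auto.
      intros; cbv beta; unfold Ebd, wv, Gf; ctac.
    + intros x. apply Ebd_nonneg; auto.
    + apply (Hex (fun x t => Ebd g al A B (rho x t) (rx x t) (u x t))); auto.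
      intros; cbv beta; unfold Ebd, wv, Gf; ctac.
    + intros x. unfold I0. rewrite rhoPsi_Gf by auto. fold A B.
      apply Ebd_init; auto.
    + intros eps Heps. destruct (DFbd (eps / 2) ltac:(lra)) as [R0 HR0].
      exists (Rabs R0). intros a b Ha Hb.
      assert (HRa := Rle_abs R0). assert (HRb : - Rabs R0 <= R0) by (unfold Rabs; destruct Rcase_abs; lra).
      apply (energy_bd (Dstrip T) (fun _ => True) T g al A B a b rho rx rt rxx rxt u ux ut uxx eps).
      all: try solve [apply HD_strip | intros; exact I | auto | lra].
      intros s Hs. assert (H1 := HR0 a s ltac:(lra) ltac:(unfold Rabs at 1; destruct Rcase_abs; lra)).
        assert (H2 := HR0 b s ltac:(lra) ltac:(unfold Rabs at 1; destruct Rcase_abs; lra)).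
        revert H1 H2. unfold Rabs; repeat destruct Rcase_abs; lra.
Qed.

Lemma ex_strip T rho rx u ux (F : R -> R -> R) : 0 < T ->
  cont_on (Dstrip T) rho -> cont_on (Dstrip T) rx -> cont_on (Dstrip T) u -> cont_on (Dstrip T) ux ->
  (forall x t, 0 <= t <= T -> 0 < rho x t) ->
  (forall a b, a < b ->
       (forall x t, continuity_2d_pt (fun x t => rho (clamp a b x) (clamp 0 T t)) x t) ->
       (forall x t, continuity_2d_pt (fun x t => rx (clamp a b x) (clamp 0 T t)) x t) ->
       (forall x t, continuity_2d_pt (fun x t => u (clamp a b x) (clamp 0 T t)) x t) ->
       (forall x t, continuity_2d_pt (fun x t => ux (clamp a b x) (clamp 0 T t)) x t) ->
       (forall x t, 0 < rho (clamp a b x) (clamp 0 T t)) ->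
       forall x t, continuity_2d_pt (fun x t => F (clamp a b x) (clamp 0 T t)) x t) ->
  forall s, 0 <= s <= T -> forall a b, a <= b -> ex_RInt (fun x => F x s) a b.
Proof.
  intros HT Cr Crx Cu Cux Hpos HF s Hs. apply ex_gen. intros a b Hab.
  apply ccont_exRInt; [lra|]. apply (c2d_ccont F a b T s); [lra| auto|].
  apply HF; auto.
  - apply (clamp_data _ _ _ _ _ _ (HD_strip T) Hab (X_true a b) HT Cr).
  - apply (clamp_data _ _ _ _ _ _ (HD_strip T) Hab (X_true a b) HT Crx).
  - apply (clamp_data _ _ _ _ _ _ (HD_strip T) Hab (X_true a b) HT Cu).
  - apply (clamp_data _ _ _ _ _ _ (HD_strip T) Hab (X_true a b) HT Cux).
  - intros; apply Hpos. apply clamp_in; lra.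
Qed.

Lemma part_a gamma alpha : 1 < gamma -> 0 < alpha < / 2 ->
  (forall rhobar : R, 0 < rhobar ->
   exists Ct C : R -> R,
     (forall e, 0 < Ct e /\ Ct e <= C e) /\
     forall (T : R) (rho u q : R -> R -> R) (E0 : R),
       0 < T ->
       is_solution (Dstrip T) gamma alpha rho u ->
       smooth_on (Dstrip T) (decay0 T) (fun x t => rho x t - rhobar) ->
       smooth_on (Dstrip T) (decay0 T) u ->
       (forall x t, Dstrip T x t ->
          pdx (Dstrip T) (fun y s => Rpower (rho y s) (alpha - / 2)) x t (q x t)) ->
       has_int_R (fun x => rho x 0 * (u x 0)^2 + (q x 0)^2
                           + rhoPsi gamma rhobar (rho x 0)) E0 ->
       forall x t, Dstrip T x t -> Ct E0 <= rho x t <= C E0).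
Proof.
  intros Hg Hal rb Hrb.
  set (be := / 2 - alpha).
  set (Kc := 1 + / (alpha - / 2) ^ 2).
  set (B1 := fun e => Kc * Rabs e + 1).
  set (B2 := fun e => 2 * B1 e).
  set (A := Aa gamma rb). set (B := Ba gamma rb).
  set (rstar := Rpower (2 * B) (/ (gamma - 1))).
  set (Cup := fun e => Rmax (rstar * Rpower 2 (/ be))
      (Rpower (2 * (gamma - 1) * B1 e * B2 e * Rpower 2 (gamma / be)) (/ (gamma - 2 * be)))).
  set (rlow := (gamma - 1) / (2 * gamma) * rb).
  set (m0 := Rpower rb gamma / 2).
  set (Ct := fun e => Rmin (Rpower 2 (- / be) * rlow) (Rpower (4 * B1 e * B2 e / m0) (- / (2 * be)))).
  assert (Hbe : 0 < be) by (unfold be; lra).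
  assert (Hc0 : 0 < (alpha - / 2) ^ 2) by (replace ((alpha - / 2) ^ 2) with ((/ 2 - alpha) ^ 2) by ring; apply pow_lt; lra).
  assert (HKc : 1 <= Kc) by (unfold Kc; assert (0 < / (alpha - / 2) ^ 2) by (apply Rinv_0_lt_compat; auto); lra).
  assert (HB1 : forall e, 0 < B1 e) by (intros; unfold B1; assert (0 <= Rabs e) by apply Rabs_pos; nra).
  assert (HB2 : forall e, 0 < B2 e) by (intros; unfold B2; specialize (HB1 e); lra).
  assert (Hrlow : 0 < rlow) by (unfold rlow; apply Rmult_lt_0_compat; [apply Rdiv_lt_0_compat|]; lra).
  assert (Hm0 : 0 < m0) by (unfold m0; assert (0 < Rpower rb gamma) by apply rp_pos; lra).
  exists Ct, (fun e => Rmax (Cup e) (Ct e)). split.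
  { intros e. split; [|apply Rmax_r]. unfold Ct. apply Rmin_pos.
    - apply Rmult_lt_0_compat; [apply rp_pos| auto].
    - apply rp_pos. }
  intros T rho u q E0 HT Hsol Hsr Hsu Hq HE0 x t Hxt.
  assert (Pf : decay0 T (fun x t => rho x t - rb)) by (destruct Hsr; auto).
  assert (Pu : decay0 T u) by (destruct Hsu; auto).
  destruct (build (Dstrip T) (fun _ => True) T gamma alpha rho u (fun x t => rho x t - rb) rb (decay0 T) (decay0 T)
     (HD_strip T) HT (fun x t => eq_refl) Hsol Hsr Hsu)
    as [rx [rt [rxx [rxt [ux [ut [uxx [HG [Cr [Crx [Crt [Crxx [Crxt [Cu [Cux [Cut [Cuxx [Prx Pux]]]]]]]]]]]]]]]]]].
  unfold Dstrip in Hxt.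
  assert (Hest := est_a T gamma alpha rb rho u q E0 rx rt rxx rxt ux ut uxx Hg Hal Hrb HT HG
     Cr Crx Crt Crxx Crxt Cu Cux Cut Cuxx Pf Prx Pu Pux Hq HE0 t Hxt).
  fold A B Kc in Hest.
  assert (Hpos : forall x t, 0 <= t <= T -> 0 < rho x t) by (intros; apply (g_pos _ _ _ _ _ _ _ _ _ _ _ _ _ HG); auto).
  assert (HGf : forall x t, 0 <= t <= T -> 0 <= Gf gamma A B (rho x t)) by (intros; apply Gf_nonneg_a; auto).
  assert (HexEen : forall a b, a <= b -> ex_RInt (fun x => Een gamma A B (rho x t) (u x t)) a b).
  { apply (ex_strip T rho rx u ux (fun x t => Een gamma A B (rho x t) (u x t))); auto.
    intros; cbv beta; unfold Een, Gf; ctac. }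
  assert (HexEbd : forall a b, a <= b -> ex_RInt (fun x => Ebd gamma alpha A B (rho x t) (rx x t) (u x t)) a b).
  { apply (ex_strip T rho rx u ux (fun x t => Ebd gamma alpha A B (rho x t) (rx x t) (u x t))); auto.
    intros; cbv beta; unfold Ebd, wv, Gf; ctac. }
  assert (HexG : forall a b, a <= b -> ex_RInt (fun x => Gf gamma A B (rho x t)) a b).
  { apply (ex_strip T rho rx u ux (fun x t => Gf gamma A B (rho x t))); auto.
    intros; cbv beta; unfold Gf; ctac. }
  assert (Hexz : forall a b, a <= b -> ex_RInt (fun x => zx alpha (rho x t) (rx x t) ^ 2) a b).
  { apply (ex_strip T rho rx u ux (fun x t => zx alpha (rho x t) (rx x t) ^ 2)); auto.
    intros; cbv beta; unfold zx; ctac. }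
  assert (HZ1 : forall x y, x <= y ->
     (Rpower (rho y t) (- be) - Rpower (rho x t) (- be)) ^ 2 <= (y - x) * B2 E0).
  { intros x0 y Hxy. replace (- be) with (alpha - / 2) by (unfold be; ring).
    eapply Rle_trans.
    - apply (z_estimate (Dstrip T) (fun _ => True) T gamma alpha (x0 - 1) (y + 1) rho rx rt rxx rxt u ux ut uxx t x0 y);
        try solve [apply HD_strip | intros; exact I | auto | lra].
    - apply Rmult_le_compat_l; [lra|].
      apply Rle_trans with (RInt (fun s => plus (Een gamma A B (rho s t) (u s t)) (Ebd gamma alpha A B (rho s t) (rx s t) (u s t))) x0 y).
      + apply RInt_le; auto. apply (@ex_RInt_plus R_NormedModule); auto.
        intros s Hs. apply zx_pw; auto.
      + rewrite (@RInt_plus R_CompleteNormedModule) by auto. unfold plus; simpl.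
        destruct (Hest x0 y Hxy) as [E1 E2]. unfold B2, B1.
        assert (0 <= Kc * Rabs E0) by (apply Rmult_le_pos; [lra| apply Rabs_pos]). lra. }
  assert (HZ : forall x y, (Rpower (rho y t) (- be) - Rpower (rho x t) (- be)) ^ 2 <= Rabs (y - x) * B2 E0).
  { intros x0 y. destruct (Rle_dec x0 y).
    - rewrite Rabs_right by lra. auto.
    - rewrite Rabs_left by lra. replace (- (y - x0)) with (x0 - y) by ring.
      replace ((Rpower (rho y t) (- be) - Rpower (rho x0 t) (- be)) ^ 2)
        with ((Rpower (rho x0 t) (- be) - Rpower (rho y t) (- be)) ^ 2) by ring.
      apply HZ1; lra. }
  assert (HGi : forall c d m, c <= d -> (forall y, c < y < d -> m <= Gf gamma A B (rho y t)) -> m * (d - c) <= B1 E0).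
  { intros c d m Hcd Hm. eapply Rle_trans; [apply (RInt_ge_const (fun x => Gf gamma A B (rho x t)) c d m Hcd (HexG c d Hcd) Hm)|].
    apply Rle_trans with (RInt (fun x => Een gamma A B (rho x t) (u x t)) c d).
    - apply RInt_le; auto. intros s Hs. unfold Een.
      assert (0 <= rho s t * u s t ^ 2 / 2) by (assert (0 <= u s t ^ 2) by apply pow2_ge_0; assert (0 < rho s t) by auto;
        unfold Rdiv; apply Rmult_le_pos; [apply Rmult_le_pos|]; lra). lra.
    - destruct (Hest c d Hcd) as [E1 _]. unfold B1. lra. }
  split.
  - apply (lower_a (fun y => rho y t) (Gf gamma A B) be (B1 E0) (B2 E0) rlow m0 x); auto.
    intros r Hr. apply Gf_small_a; auto.
  - eapply Rle_trans; [|apply Rmax_l].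
    apply (upper_a (fun y => rho y t) (Gf gamma A B) be gamma (B1 E0) (B2 E0) rstar x); auto.
    + unfold be; lra.
    + unfold rstar. apply rp_pos.
    + intros r Hr. apply Gf_big_a; auto.
Qed.

Lemma HD_rect M T : forall x t, Drect M T x t <-> (fun x => - M <= x <= M) x /\ 0 <= t <= T.
Proof. intros; unfold Drect; tauto. Qed.

Lemma X_rect M : forall y, - M <= y <= M -> (fun x => - M <= x <= M) y.
Proof. auto. Qed.

Lemma Gf0 g r : 1 < g -> Gf g 0 0 r = Rpower r g / (g - 1).
Proof. intros; unfold Gf. field. lra. Qed.

Lemma ext_max (f : R -> R) a b : a <= b -> ccont a b f ->
  (exists mn, a <= mn <= b /\ forall c, a <= c <= b -> f mn <= f c) /\
  (exists mx, a <= mx <= b /\ forall c, a <= c <= b -> f c <= f mx).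
Proof.
  intros Hab Hc. split.
  - destruct (continuity_ab_min (fun y => f (clamp a b y)) a b Hab) as [mn [H1 H2]].
    { intros; apply Hc. }
    exists mn. split; auto. intros c Hc'. specialize (H1 c Hc').
    rewrite !clamp_id in H1 by lra. exact H1.
  - destruct (continuity_ab_maj (fun y => f (clamp a b y)) a b Hab) as [mx [H1 H2]].
    { intros; apply Hc. }
    exists mx. split; auto. intros c Hc'. specialize (H1 c Hc').
    rewrite !clamp_id in H1 by lra. exact H1.
Qed.

Lemma part_b gamma alpha : 1 < gamma -> 0 < alpha < / 2 ->
  (exists (C : R -> R -> R) (CM : R -> R -> R -> R),
     (forall M E0 m0, 0 < M -> 0 < CM M E0 m0) /\
     forall (M T : R) (rho u q : R -> R -> R) (E0 m0 : R),
       0 < M -> 0 < T ->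
       is_solution (Drect M T) gamma alpha rho u ->
       smooth_on (Drect M T) noP rho ->
       smooth_on (Drect M T) noP u ->
       (forall t, 0 <= t <= T -> u (- M) t = 0 /\ u M t = 0) ->
       (forall x t, Drect M T x t ->
          pdx (Drect M T) (fun y s => Rpower (rho y s) (alpha - / 2)) x t (q x t)) ->
       has_int (fun x => rho x 0 * (u x 0)^2 + (q x 0)^2
                         + Rpower (rho x 0) gamma) (- M) M E0 ->
       has_int (fun x => rho x 0) (- M) M m0 ->
       forall x t, Drect M T x t -> CM M E0 m0 <= rho x t <= C E0 m0).
Proof.
  intros Hg Hal.
  set (be := / 2 - alpha).
  set (c0 := (alpha - / 2) ^ 2).
  set (Kc := (1 + / c0) * (1 + / (gamma - 1))).
  set (B1 := fun e => Kc * Rabs e + 1).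
  set (B2 := fun e => 2 * B1 e).
  assert (Hbe : 0 < be) by (unfold be; lra).
  assert (Hc0 : 0 < c0) by (unfold c0; replace ((alpha - / 2) ^ 2) with ((/ 2 - alpha) ^ 2) by ring; apply pow_lt; lra).
  assert (Hic0 : 0 < / c0) by (apply Rinv_0_lt_compat; auto).
  assert (Hig : 0 < / (gamma - 1)) by (apply Rinv_0_lt_compat; lra).
  assert (HKc1 : 1 + / (gamma - 1) <= Kc).
  { unfold Kc. assert (0 <= / c0 * (1 + / (gamma - 1))) by (apply Rmult_le_pos; lra). nra. }
  assert (HKc : 0 < Kc) by lra.
  assert (HB1 : forall e, 0 < B1 e) by (intros; unfold B1; assert (0 <= Rabs e) by apply Rabs_pos; nra).
  assert (HB2 : forall e, 0 < B2 e) by (intros; unfold B2; specialize (HB1 e); lra).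
  exists (fun e m => Rmax (Rpower 2 (/ be) * Rpower ((gamma - 1) * B1 e / m) (/ (gamma - 1)))
                 (Rpower (2 * (gamma - 1) * B1 e * B2 e * Rpower 2 (gamma / be)) (/ (gamma - 2 * be)))),
         (fun M e m => Rpower (Rpower (m / (2 * M)) (- be) + sqrt (2 * M * B2 e)) (- / be)).
  split; [intros; apply rp_pos|].
  intros M T rho u q E0 m0 HM HT Hsol Hsr Hsu Hbd Hq HE0 Hm0 x t Hxt.
  assert (Hf : forall x t, rho x t = rho x t - 0) by (intros; ring).
  destruct (build (Drect M T) (fun x => - M <= x <= M) T gamma alpha rho u rho 0 noP noP
     (HD_rect M T) HT Hf Hsol Hsr Hsu)
    as [rx [rt [rxx [rxt [ux [ut [uxx [HG [Cr [Crx [Crt [Crxx [Crxt [Cu [Cux [Cut [Cuxx _]]]]]]]]]]]]]]]]].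
  unfold Drect in Hxt. destruct Hxt as [Hx Ht].
  assert (Hab : - M < M) by lra.
  assert (HX := X_rect M).
  assert (Hpos : forall x t, - M <= x <= M -> 0 <= t <= T -> 0 < rho x t)
    by (intros; apply (g_pos _ _ _ _ _ _ _ _ _ _ _ _ _ HG); auto).
  assert (HGf : forall x t, - M <= x <= M -> 0 <= t <= T -> 0 <= Gf gamma 0 0 (rho x t)).
  { intros. rewrite Gf0 by auto. assert (0 < Rpower (rho x0 t0) gamma) by apply rp_pos.
    unfold Rdiv; apply Rmult_le_pos; lra. }
  assert (Pr : forall x t, 0 < rho (clamp (- M) M x) (clamp 0 T t)).
  { intros. apply Hpos; apply clamp_in; lra. }
  assert (C1 := clamp_data _ _ _ _ _ _ (HD_rect M T) Hab HX HT Cr).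
  assert (C2 := clamp_data _ _ _ _ _ _ (HD_rect M T) Hab HX HT Crx).
  assert (C3 := clamp_data _ _ _ _ _ _ (HD_rect M T) Hab HX HT Cu).
  assert (C4 := clamp_data _ _ _ _ _ _ (HD_rect M T) Hab HX HT Cux).
  assert (Hcc : forall (F : R -> R -> R), (forall x t, continuity_2d_pt (fun x t => F (clamp (- M) M x) (clamp 0 T t)) x t) ->
            forall s, 0 <= s <= T -> ccont (- M) M (fun x => F x s)).
  { intros F HF s Hs. apply (c2d_ccont F (- M) M T s); auto; lra. }
  assert (Hex : forall (F : R -> R -> R), (forall x t, continuity_2d_pt (fun x t => F (clamp (- M) M x) (clamp 0 T t)) x t) ->
            forall s, 0 <= s <= T -> forall c d, - M <= c -> c <= d -> d <= M -> ex_RInt (fun x => F x s) c d).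
  { intros F HF s Hs c d H1 H2 H3. apply (ccont_exRInt_sub (- M) M); auto. }
  assert (HT0 : 0 <= 0 <= T) by lra.
  assert (Hq0 : forall x, - M < x < M -> q x 0 = zx alpha (rho x 0) (rx x 0)).
  { intros x0 Hx0. assert (Hxi := Xint_ab _ (- M) M x0 HX Hx0). eapply uniqueness_limite.
    - apply (pdx_dpl' (Drect M T) (fun x => - M <= x <= M) T (fun y s => Rpower (rho y s) (alpha - / 2)) x0 0);
        [apply HD_rect| exact Hxi| lra| apply Hq; unfold Drect; split; lra].
    - destruct (g_dx _ _ _ _ _ _ _ _ _ _ _ _ _ HG x0 0 Hxi HT0) as [D1 _].
      assert (Hr := Hpos x0 0 ltac:(lra) HT0). unfold zx. eapply dpl_eq; [dtac|]. ring. }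
  set (I0 := fun x => rho x 0 * u x 0 ^ 2 + q x 0 ^ 2 + Rpower (rho x 0) gamma).
  assert (HI : RInt I0 (- M) M = E0).
  { destruct HE0 as [pr Hpr]. rewrite <- Hpr. apply RInt_Reals. }
  assert (HexI : ex_RInt I0 (- M) M) by (destruct HE0 as [pr _]; apply ex_RInt_Reals_1; exact pr).
  assert (Hbase : forall x, - M < x < M -> rho x 0 * u x 0 ^ 2 + q x 0 ^ 2 + Gf gamma 0 0 (rho x 0) <= (1 + / (gamma - 1)) * I0 x).
  { intros x0 Hx0. unfold I0. rewrite Gf0 by auto.
    assert (0 < Rpower (rho x0 0) gamma) by apply rp_pos.
    assert (0 <= rho x0 0 * u x0 0 ^ 2) by (apply Rmult_le_pos; [left; apply Hpos; lra| apply pow2_ge_0]).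
    assert (0 <= q x0 0 ^ 2) by apply pow2_ge_0.
    assert (0 <= / (gamma - 1) * (rho x0 0 * u x0 0 ^ 2 + q x0 0 ^ 2)) by (apply Rmult_le_pos; lra).
    unfold Rdiv. nra. }
  assert (HI0p : forall x, - M < x < M -> 0 <= I0 x).
  { intros x0 Hx0. unfold I0. assert (0 < Rpower (rho x0 0) gamma) by apply rp_pos.
    assert (0 <= rho x0 0 * u x0 0 ^ 2) by (apply Rmult_le_pos; [left; apply Hpos; lra| apply pow2_ge_0]).
    assert (0 <= q x0 0 ^ 2) by apply pow2_ge_0. lra. }
  assert (HKI : Kc * RInt I0 (- M) M <= Kc * Rabs E0) by (rewrite HI; apply Rmult_le_compat_l; [lra| apply Rle_abs]).
  assert (HRI : forall (F0 : R -> R), ex_RInt F0 (- M) M -> (forall x, - M < x < M -> F0 x <= Kc * I0 x) ->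
             RInt F0 (- M) M <= Kc * Rabs E0).
  { intros F0 HF0 Hle. eapply Rle_trans; [|exact HKI].
    apply Rle_trans with (RInt (fun x => scal Kc (I0 x)) (- M) M).
    - apply RInt_le; [lra| auto| apply (@ex_RInt_scal R_NormedModule); auto| auto].
    - rewrite (@RInt_scal R_CompleteNormedModule) by auto. right; reflexivity. }
  assert (Hfl0 : forall s, 0 < s < T -> u (- M) s = 0 /\ u M s = 0) by (intros; apply Hbd; lra).
  assert (EN : RInt (fun x => Een gamma 0 0 (rho x t) (u x t)) (- M) M <= Kc * Rabs E0).
  { eapply Rle_trans.
    - apply (energy_en (Drect M T) (fun x => - M <= x <= M) T gamma alpha 0 0 (- M) M rho rx rt rxx rxt u ux ut uxx 0).
      all: try solve [apply HD_rect | auto | lra].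
      intros s Hs. destruct (Hfl0 s Hs) as [E1 E2]. rewrite E1, E2. unfold Fen. right. field. lra.
    - rewrite Rmult_0_l, Rplus_0_r. apply HRI.
      + apply (Hex (fun x t => Een gamma 0 0 (rho x t) (u x t))); try lra. intros; cbv beta; unfold Een, Gf; ctac.
      + intros x0 Hx0. eapply Rle_trans; [|apply Rmult_le_compat_r; [apply HI0p; auto| exact HKc1]].
        eapply Rle_trans; [|apply Hbase; auto]. unfold Een.
        assert (0 <= rho x0 0 * u x0 0 ^ 2) by (apply Rmult_le_pos; [left; apply Hpos; lra| apply pow2_ge_0]).
        assert (0 <= q x0 0 ^ 2) by apply pow2_ge_0. lra. }
  assert (BD : RInt (fun x => Ebd gamma alpha 0 0 (rho x t) (rx x t) (u x t)) (- M) M <= Kc * Rabs E0).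
  { eapply Rle_trans.
    - apply (energy_bd (Drect M T) (fun x => - M <= x <= M) T gamma alpha 0 0 (- M) M rho rx rt rxx rxt u ux ut uxx 0).
      all: try solve [apply HD_rect | auto | lra].
      intros s Hs. destruct (Hfl0 s Hs) as [E1 E2]. rewrite E1, E2. unfold Fbd. right. field. lra.
    - rewrite Rmult_0_l, Rplus_0_r. apply HRI.
      + apply (Hex (fun x t => Ebd gamma alpha 0 0 (rho x t) (rx x t) (u x t))); try lra.
        intros; cbv beta; unfold Ebd, wv, Gf; ctac.
      + intros x0 Hx0. eapply Rle_trans.
        * apply (Ebd_init gamma alpha 0 0 (rho x0 0) (rx x0 0) (u x0 0) (q x0 0)); [auto| apply Hpos; lra| apply HGf; lra| apply Hq0; auto].
        * unfold Kc. rewrite Rmult_assoc. apply Rmult_le_compat_l; [lra|]. apply Hbase; auto. }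
  assert (HexEen : forall c d, - M <= c -> c <= d -> d <= M -> ex_RInt (fun x => Een gamma 0 0 (rho x t) (u x t)) c d).
  { apply (Hex (fun x t => Een gamma 0 0 (rho x t) (u x t))); try lra. intros; cbv beta; unfold Een, Gf; ctac. }
  assert (HexEbd : forall c d, - M <= c -> c <= d -> d <= M -> ex_RInt (fun x => Ebd gamma alpha 0 0 (rho x t) (rx x t) (u x t)) c d).
  { apply (Hex (fun x t => Ebd gamma alpha 0 0 (rho x t) (rx x t) (u x t))); try lra. intros; cbv beta; unfold Ebd, wv, Gf; ctac. }
  assert (HexG : forall c d, - M <= c -> c <= d -> d <= M -> ex_RInt (fun x => Gf gamma 0 0 (rho x t)) c d).
  { apply (Hex (fun x t => Gf gamma 0 0 (rho x t))); try lra. intros; cbv beta; unfold Gf; ctac. }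
  assert (Hexz : forall c d, - M <= c -> c <= d -> d <= M -> ex_RInt (fun x => zx alpha (rho x t) (rx x t) ^ 2) c d).
  { apply (Hex (fun x t => zx alpha (rho x t) (rx x t) ^ 2)); try lra. intros; cbv beta; unfold zx; ctac. }
  assert (Hexr : forall s, 0 <= s <= T -> forall c d, - M <= c -> c <= d -> d <= M -> ex_RInt (fun x => rho x s) c d).
  { intros s Hs. apply (Hex (fun x t => rho x t)); auto. }
  assert (ENs : forall c d, - M <= c -> c <= d -> d <= M -> RInt (fun x => Een gamma 0 0 (rho x t) (u x t)) c d <= Kc * Rabs E0).
  { intros c d H1 H2 H3. eapply Rle_trans; [|exact EN]. apply RInt_sub_le; auto; [apply HexEen; lra|].
    intros s Hs. apply Een_nonneg; [apply Hpos; lra| apply HGf; lra]. }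
  assert (BDs : forall c d, - M <= c -> c <= d -> d <= M -> RInt (fun x => Ebd gamma alpha 0 0 (rho x t) (rx x t) (u x t)) c d <= Kc * Rabs E0).
  { intros c d H1 H2 H3. eapply Rle_trans; [|exact BD]. apply RInt_sub_le; auto; [apply HexEbd; lra|].
    intros s Hs. apply Ebd_nonneg; [apply Hpos; lra| apply HGf; lra]. }
  assert (Hm0' : RInt (fun x => rho x 0) (- M) M = m0).
  { destruct Hm0 as [pr Hpr]. rewrite <- Hpr. apply RInt_Reals. }
  assert (MS : RInt (fun x => rho x t) (- M) M = m0).
  { assert (M1 := mass_eq (Drect M T) (fun x => - M <= x <= M) T gamma alpha (- M) M rho rx rt rxx rxt u ux ut uxx 1 0
       (HD_rect M T) Hab HT HX HG Cr Crx Crt Cu Cux).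
    assert (M2 := mass_eq (Drect M T) (fun x => - M <= x <= M) T gamma alpha (- M) M rho rx rt rxx rxt u ux ut uxx (-1) 0
       (HD_rect M T) Hab HT HX HG Cr Crx Crt Cu Cux).
    assert (F1 : forall s, 0 < s < T -> 1 * (rho (- M) s * u (- M) s) - 1 * (rho M s * u M s) <= 0).
    { intros s Hs. destruct (Hfl0 s Hs) as [E1 E2]. rewrite E1, E2. lra. }
    assert (F2 : forall s, 0 < s < T -> -1 * (rho (- M) s * u (- M) s) - -1 * (rho M s * u M s) <= 0).
    { intros s Hs. destruct (Hfl0 s Hs) as [E1 E2]. rewrite E1, E2. lra. }
    specialize (M1 F1 t Ht). specialize (M2 F2 t Ht).
    assert (E : forall sg s, 0 <= s <= T -> RInt (fun x => sg * rho x s) (- M) M = sg * RInt (fun x => rho x s) (- M) M).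
    { intros sg s Hs. apply (@RInt_scal R_CompleteNormedModule). apply Hexr; auto; lra. }
    rewrite !E in M1, M2 by lra. lra. }
  assert (Hm0p : 0 < m0).
  { destruct (ext_max (fun y => rho y 0) (- M) M ltac:(lra) (Hcc (fun x t => rho x t) C1 0 HT0)) as [[mn [Hmn1 Hmn2]] _].
    rewrite <- Hm0'. eapply Rlt_le_trans; [|apply (RInt_ge_const (fun x => rho x 0) (- M) M (rho mn 0)); try lra].
    - assert (0 < rho mn 0) by (apply Hpos; lra). nra.
    - apply Hexr; lra.
    - intros; apply Hmn2; lra. }
  destruct (ext_max (fun y => rho y t) (- M) M ltac:(lra) (Hcc (fun x t => rho x t) C1 t Ht)) as [_ [ys [Hys1 Hys2]]].
  assert (Hys : m0 / (2 * M) <= rho ys t).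
  { rewrite <- MS.
    assert (Hle : RInt (fun x => rho x t) (- M) M <= rho ys t * (M - - M)).
    { apply RInt_le_const'; [lra| apply Hexr; lra| intros; apply Hys2; lra]. }
    apply Rle_trans with (rho ys t * (M - - M) / (2 * M)).
    - unfold Rdiv. apply Rmult_le_compat_r; [left; apply Rinv_0_lt_compat; lra| exact Hle].
    - right. field. lra. }
  assert (HZ1 : forall x y, - M <= x -> x <= y -> y <= M ->
     (Rpower (rho y t) (- be) - Rpower (rho x t) (- be)) ^ 2 <= (y - x) * B2 E0).
  { intros x0 y H1 Hxy H2. replace (- be) with (alpha - / 2) by (unfold be; ring).
    eapply Rle_trans.
    - apply (z_estimate (Drect M T) (fun x => - M <= x <= M) T gamma alpha (- M) M rho rx rt rxx rxt u ux ut uxx t x0 y);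
        try solve [apply HD_rect | auto | lra].
    - apply Rmult_le_compat_l; [lra|].
      apply Rle_trans with (RInt (fun s => plus (Een gamma 0 0 (rho s t) (u s t)) (Ebd gamma alpha 0 0 (rho s t) (rx s t) (u s t))) x0 y).
      + apply RInt_le; auto. apply (@ex_RInt_plus R_NormedModule); auto.
        intros s Hs. apply zx_pw; auto; [apply Hpos; lra| apply HGf; lra].
      + rewrite (@RInt_plus R_CompleteNormedModule) by auto. unfold plus; simpl.
        assert (E1 := ENs x0 y H1 Hxy H2). assert (E2 := BDs x0 y H1 Hxy H2). unfold B2, B1.
        assert (0 <= Kc * Rabs E0) by (apply Rmult_le_pos; [lra| apply Rabs_pos]). lra. }
  assert (HZ : forall x y, - M <= x <= M -> - M <= y <= M ->
     (Rpower (rho y t) (- be) - Rpower (rho x t) (- be)) ^ 2 <= Rabs (y - x) * B2 E0).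
  { intros x0 y Hx0 Hy. destruct (Rle_dec x0 y).
    - rewrite Rabs_right by lra. apply HZ1; lra.
    - rewrite Rabs_left by lra. replace (- (y - x0)) with (x0 - y) by ring.
      replace ((Rpower (rho y t) (- be) - Rpower (rho x0 t) (- be)) ^ 2)
        with ((Rpower (rho x0 t) (- be) - Rpower (rho y t) (- be)) ^ 2) by ring.
      apply HZ1; lra. }
  assert (HGi : forall c d m, - M <= c -> c <= d -> d <= M ->
     (forall y, c < y < d -> m <= Rpower (rho y t) gamma / (gamma - 1)) -> m * (d - c) <= B1 E0).
  { intros c d m H1 Hcd H2 Hm. eapply Rle_trans.
    - apply (RInt_ge_const (fun x => Gf gamma 0 0 (rho x t)) c d m Hcd (HexG c d H1 Hcd H2)).
      intros y Hy. rewrite Gf0 by auto. auto.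
    - apply Rle_trans with (RInt (fun x => Een gamma 0 0 (rho x t) (u x t)) c d).
      + apply RInt_le; auto. intros s Hs. unfold Een.
        assert (0 <= rho s t * u s t ^ 2 / 2) by (assert (0 <= u s t ^ 2) by apply pow2_ge_0; assert (0 < rho s t) by (apply Hpos; lra);
          unfold Rdiv; apply Rmult_le_pos; [apply Rmult_le_pos|]; lra). lra.
      + assert (E1 := ENs c d H1 Hcd H2). unfold B1. lra. }
  assert (HGM : forall m, (forall y, - M < y < M -> m * rho y t <= Rpower (rho y t) gamma / (gamma - 1)) -> m * m0 <= B1 E0).
  { intros m Hm. rewrite <- MS.
    rewrite <- (@RInt_scal R_CompleteNormedModule) by (apply Hexr; lra).
    apply Rle_trans with (RInt (fun x => Gf gamma 0 0 (rho x t)) (- M) M).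
    - apply RInt_le; [lra| apply (@ex_RInt_scal R_NormedModule); apply Hexr; lra| apply HexG; lra|].
      intros y Hy. rewrite Gf0 by auto. unfold scal; simpl; unfold mult; simpl. auto.
    - apply Rle_trans with (RInt (fun x => Een gamma 0 0 (rho x t) (u x t)) (- M) M).
      + apply RInt_le; [lra| apply HexG; lra| apply HexEen; lra|]. intros s Hs. unfold Een.
        assert (0 <= rho s t * u s t ^ 2 / 2) by (assert (0 <= u s t ^ 2) by apply pow2_ge_0; assert (0 < rho s t) by (apply Hpos; lra);
          unfold Rdiv; apply Rmult_le_pos; [apply Rmult_le_pos|]; lra). lra.
      + unfold B1. lra. }
  split.
  - apply (lower_b (fun y => rho y t) be (B2 E0) M m0 x ys); try solve [auto | intros; apply Hpos; auto].
  - apply (upper_b (fun y => rho y t) be gamma (B1 E0) (B2 E0) M m0 x); try solve [auto | unfold be; lra | intros; apply Hpos; auto].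
Qed.

Theorem lemma3p2 (gamma alpha : R) (Hgamma : 1 < gamma)
  (Halpha : 0 < alpha < / 2) :
  (* (a) rhobar > 0, whole line *)
  (forall rhobar : R, 0 < rhobar ->
   exists Ct C : R -> R,
     (forall e, 0 < Ct e /\ Ct e <= C e) /\
     forall (T : R) (rho u q : R -> R -> R) (E0 : R),
       0 < T ->
       is_solution (Dstrip T) gamma alpha rho u ->
       smooth_on (Dstrip T) (decay0 T) (fun x t => rho x t - rhobar) ->
       smooth_on (Dstrip T) (decay0 T) u ->
       (forall x t, Dstrip T x t ->
          pdx (Dstrip T) (fun y s => Rpower (rho y s) (alpha - / 2)) x t (q x t)) ->
       has_int_R (fun x => rho x 0 * (u x 0)^2 + (q x 0)^2
                           + rhoPsi gamma rhobar (rho x 0)) E0 ->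
       forall x t, Dstrip T x t -> Ct E0 <= rho x t <= C E0)
  /\
  (* (b) rhobar = 0, bounded interval with u(+-M,t) = 0 *)
  (exists (C : R -> R -> R) (CM : R -> R -> R -> R),
     (forall M E0 m0, 0 < M -> 0 < CM M E0 m0) /\
     forall (M T : R) (rho u q : R -> R -> R) (E0 m0 : R),
       0 < M -> 0 < T ->
       is_solution (Drect M T) gamma alpha rho u ->
       smooth_on (Drect M T) noP rho ->
       smooth_on (Drect M T) noP u ->
       (forall t, 0 <= t <= T -> u (- M) t = 0 /\ u M t = 0) ->
       (forall x t, Drect M T x t ->
          pdx (Drect M T) (fun y s => Rpower (rho y s) (alpha - / 2)) x t (q x t)) ->
       has_int (fun x => rho x 0 * (u x 0)^2 + (q x 0)^2
                         + Rpower (rho x 0) gamma) (- M) M E0 ->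
       has_int (fun x => rho x 0) (- M) M m0 ->
       forall x t, Drect M T x t -> CM M E0 m0 <= rho x t <= C E0 m0).
Proof.
  split.
  - apply part_a; auto.
  - apply part_b; auto.
Qed.
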